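(* Let $(X,\mathbb{A},d)$ be a complete $C^*$-algebra valued metric space, where $\mathbb{A}$ is a unital $C^*$-algebra, and let $T:X\to X$ be a $C^*$-algebra valued Ćirić-type1 contractive mapping, i.e. for every $x,y\in X$ there is $q(x,y)\in\mathbb{A}$ with $0\le \|q(x,y)\|<1$, and there is a mapping $\delta:X\times X\to\mathbb{A}_+$, such that $$d(T^n x,T^n y)\preceq (q(x,y)^* )^n\,\delta(x,y)\,q(x,y)^n\quad\text{for all }x,y\in X,\ n\in\mathbb{N}.$$ Then $T$ is orbitally continuous on $X$ if and only if $T$ has a unique fixed point in $X$.
   Context: $\mathbb{A}$ denotes a unital $C^*$-algebra with unit $I$ and zero $\theta$. An element $a\in\mathbb{A}$ is positive, written $a\succeq\theta$, if $a^*=a$ and its spectrum is contained in $[0,\infty)$; $\mathbb{A}_+$ is the set of positive elements, and $a\succeq b$ means $a-b\succeq\theta$. A $C^*$-algebra valued metric space $(X,\mathbb{A},d)$ is a nonempty set $X$ with $d:X\times X\to\mathbb{A}$ such that for all $x,y,z\in X$: $d(x,y)\succeq\theta$, with $d(x,y)=\theta$ iff $x=y$; $d(x,y)=d(y,x)$; $d(x,y)\preceq d(x,z)+d(z,y)$. A sequence $\{x_n\}$ converges to $x$ if $\|d(x_n,x)\|\to0$, and is Cauchy if $\|d(x_n,x_m)\|\to0$ as $n,m\to\infty$; the space is complete if every Cauchy sequence converges to a point of $X$. A self-map $T$ of $X$ is orbitally continuous at $u\in X$ if for every $x\in X$ and every increasing sequence of positive integers $\{n_i\}$, $\|d(T^{n_i}x,u)\|\to0$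 implies $\|d(T^{n_i+1}x,Tu)\|\to0$ as $i\to\infty$; $T$ is orbitally continuous on $X$ if it is orbitally continuous at every $u\in X$. *)

(* Defs.v *)
From Stdlib Require Import Reals.
Open Scope R_scope.

Record Cx : Type := mkC { Re : R; Im : R }.
Definition Cadd (z w : Cx) : Cx := mkC (Re z + Re w) (Im z + Im w).
Definition Cmul (z w : Cx) : Cx :=
  mkC (Re z * Re w - Im z * Im w) (Re z * Im w + Im z * Re w).
Definition Cconj (z : Cx) : Cx := mkC (Re z) (- Im z).
Definition Cone : Cx := mkC 1 0.
Definition Cmod (z : Cx) : R := sqrt (Re z * Re z + Im z * Im z).

Record CstarAlgebra : Type := {
  car :> Type;
  cadd : car -> car -> car;
  copp : car -> car;
  czero : car;
  cmul : car -> car -> car;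
  cone : car;
  cscal : Cx -> car -> car;
  cstar : car -> car;
  cnorm : car -> R;
  cadd_assoc : forall a b c, cadd a (cadd b c) = cadd (cadd a b) c;
  cadd_comm : forall a b, cadd a b = cadd b a;
  cadd_0 : forall a, cadd czero a = a;
  cadd_opp : forall a, cadd (copp a) a = czero;
  cscal_assoc : forall z w a, cscal z (cscal w a) = cscal (Cmul z w) a;
  cscal_1 : forall a, cscal Cone a = a;
  cscal_addC : forall z w a, cscal (Cadd z w) a = cadd (cscal z a) (cscal w a);
  cscal_addA : forall z a b, cscal z (cadd a b) = cadd (cscal z a) (cscal z b);
  cmul_assoc : forall a b c, cmul a (cmul b c) = cmul (cmul a b) c;
  cmul_1l : forall a, cmul cone a = a;
  cmul_1r : forall a, cmul a cone = a;
  cmul_addl : forall a b c, cmul (cadd a b) c = cadd (cmul a c) (cmul b c);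
  cmul_addr : forall a b c, cmul a (cadd b c) = cadd (cmul a b) (cmul a c);
  cscal_mull : forall z a b, cscal z (cmul a b) = cmul (cscal z a) b;
  cscal_mulr : forall z a b, cscal z (cmul a b) = cmul a (cscal z b);
  cstar_invol : forall a, cstar (cstar a) = a;
  cstar_add : forall a b, cstar (cadd a b) = cadd (cstar a) (cstar b);
  cstar_mul : forall a b, cstar (cmul a b) = cmul (cstar b) (cstar a);
  cstar_scal : forall z a, cstar (cscal z a) = cscal (Cconj z) (cstar a);
  cnorm_eq0 : forall a, cnorm a = 0 -> a = czero;
  cnorm_triangle : forall a b, cnorm (cadd a b) <= cnorm a + cnorm b;
  cnorm_scal : forall z a, cnorm (cscal z a) = Cmod z * cnorm a;
  cnorm_submult : forall a b, cnorm (cmul a b) <= cnorm a * cnorm b;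
  cnorm_one : cnorm cone = 1;
  cnorm_cstar : forall a, cnorm (cmul (cstar a) a) = cnorm a * cnorm a;
  ccomplete : forall u : nat -> car,
    (forall eps, eps > 0 -> exists N, forall n m, (n >= N)%nat -> (m >= N)%nat ->
        cnorm (cadd (u n) (copp (u m))) < eps) ->
    exists l, forall eps, eps > 0 -> exists N, forall n, (n >= N)%nat ->
        cnorm (cadd (u n) (copp l)) < eps
}.

Arguments cadd {_}. Arguments copp {_}. Arguments czero {_}. Arguments cmul {_}.
Arguments cone {_}. Arguments cscal {_}. Arguments cstar {_}. Arguments cnorm {_}.

Section CstarDefs.
Variable A : CstarAlgebra.

Definition csub (a b : A) : A := cadd a (copp b).

Fixpoint cpow (a : A) (n : nat) : A :=
  match n with O => cone | S k => cmul a (cpow a k) end.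

Definition invertible (a : A) : Prop :=
  exists b : A, cmul a b = cone /\ cmul b a = cone.

Definition spectrum (a : A) (z : Cx) : Prop := ~ invertible (csub a (cscal z cone)).

Definition positive (a : A) : Prop :=
  cstar a = a /\ forall z, spectrum a z -> Im z = 0 /\ 0 <= Re z.

Definition cle (a b : A) : Prop := positive (csub b a).
End CstarDefs.

Arguments csub {_}. Arguments cpow {_}. Arguments positive {_}. Arguments cle {_}.

Definition cstar_metric (A : CstarAlgebra) (X : Type) (d : X -> X -> A) : Prop :=
  inhabited X /\
  (forall x y, positive (d x y)) /\
  (forall x y, d x y = czero <-> x = y) /\
  (forall x y, d x y = d y x) /\
  (forall x y z, cle (d x y) (cadd (d x z) (d z y))).

Definition cconverges {A : CstarAlgebra} {X : Type} (d : X -> X -> A)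
  (u : nat -> X) (x : X) : Prop :=
  Un_cv (fun n => cnorm (d (u n) x)) 0.

Definition ccauchy {A : CstarAlgebra} {X : Type} (d : X -> X -> A) (u : nat -> X) : Prop :=
  forall eps, eps > 0 -> exists N, forall n m, (n >= N)%nat -> (m >= N)%nat ->
    cnorm (d (u n) (u m)) < eps.

Definition ccomplete_metric {A : CstarAlgebra} {X : Type} (d : X -> X -> A) : Prop :=
  forall u, ccauchy d u -> exists x, cconverges d u x.

Fixpoint iter {X : Type} (n : nat) (T : X -> X) (x : X) : X :=
  match n with O => x | S k => T (iter k T x) end.

Definition orbitally_continuous_at {A : CstarAlgebra} {X : Type} (d : X -> X -> A)
  (T : X -> X) (u : X) : Prop :=
  forall (x : X) (ni : nat -> nat),
    (forall i, (ni i < ni (S i))%nat) ->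
    cconverges d (fun i => iter (ni i) T x) u ->
    cconverges d (fun i => iter (S (ni i)) T x) (T u).

Definition orbitally_continuous {A : CstarAlgebra} {X : Type} (d : X -> X -> A)
  (T : X -> X) : Prop := forall u, orbitally_continuous_at d T u.

Definition ciric_type1 {A : CstarAlgebra} {X : Type} (d : X -> X -> A) (T : X -> X) : Prop :=
  exists (q : X -> X -> A) (delta : X -> X -> A),
    (forall x y, 0 <= cnorm (q x y) < 1) /\
    (forall x y, positive (delta x y)) /\
    (forall x y (n : nat), (1 <= n)%nat ->
       cle (d (iter n T x) (iter n T y))
           (cmul (cmul (cpow (cstar (q x y)) n) (delta x y)) (cpow (q x y) n))).

(* Main.v *)
From Stdlib Require Import Reals Lra Lia Psatz ZArith ClassicalEpsilon Classical.
Require Import Defs.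
Open Scope R_scope.


Arguments cadd_assoc {_}.
Arguments cadd_comm {_}.
Arguments cadd_0 {_}.
Arguments cadd_opp {_}.
Arguments cscal_assoc {_}.
Arguments cscal_1 {_}.
Arguments cscal_addC {_}.
Arguments cscal_addA {_}.
Arguments cmul_assoc {_}.
Arguments cmul_1l {_}.
Arguments cmul_1r {_}.
Arguments cmul_addl {_}.
Arguments cmul_addr {_}.
Arguments cscal_mull {_}.
Arguments cscal_mulr {_}.
Arguments cstar_invol {_}.
Arguments cstar_add {_}.
Arguments cstar_mul {_}.
Arguments cstar_scal {_}.
Arguments cnorm_eq0 {_}.
Arguments cnorm_triangle {_}.
Arguments cnorm_scal {_}.
Arguments cnorm_submult {_}.
Arguments cnorm_one {_}.
Arguments cnorm_cstar {_}.
Arguments ccomplete {_}.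

Lemma Ceq (z w : Cx) : Re z = Re w -> Im z = Im w -> z = w.
Proof. destruct z, w; simpl; intros; subst; reflexivity. Qed.

Ltac cx := apply Ceq; simpl; ring.

Definition RC (r : R) : Cx := mkC r 0.
Definition Czero : Cx := mkC 0 0.
Definition Copp (z : Cx) : Cx := mkC (- Re z) (- Im z).
Definition Csub (z w : Cx) : Cx := Cadd z (Copp w).
Definition Cinv (z : Cx) : Cx :=
  mkC (Re z / (Re z * Re z + Im z * Im z)) (- Im z / (Re z * Re z + Im z * Im z)).
Fixpoint Cpow (z : Cx) (n : nat) : Cx :=
  match n with O => Cone | S k => Cmul z (Cpow z k) end.

Lemma Cmul_comm z w : Cmul z w = Cmul w z. Proof. cx. Qed.
Lemma Cmul_assoc z w u : Cmul z (Cmul w u) = Cmul (Cmul z w) u. Proof. cx. Qed.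
Lemma Cmul_1l z : Cmul Cone z = z. Proof. cx. Qed.
Lemma Cmul_1r z : Cmul z Cone = z. Proof. cx. Qed.

Lemma Cmod_sq z : Cmod z * Cmod z = Re z * Re z + Im z * Im z.
Proof. unfold Cmod. apply sqrt_sqrt. nra. Qed.
Lemma Cmod_ge0 z : 0 <= Cmod z. Proof. apply sqrt_pos. Qed.
Lemma Cmod_mul z w : Cmod (Cmul z w) = Cmod z * Cmod w.
Proof.
  unfold Cmod. rewrite <- sqrt_mult by nra. f_equal. simpl. ring.
Qed.
Lemma Cmod_RC r : Cmod (RC r) = Rabs r.
Proof. unfold Cmod, RC; simpl. rewrite <- sqrt_Rsqr_abs. f_equal. unfold Rsqr. ring. Qed.
Lemma Cmod_Re z : Rabs (Re z) <= Cmod z.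
Proof. unfold Cmod. rewrite <- sqrt_Rsqr_abs. apply sqrt_le_1_alt. unfold Rsqr. nra. Qed.
Lemma Cmod_Im z : Rabs (Im z) <= Cmod z.
Proof. unfold Cmod. rewrite <- sqrt_Rsqr_abs. apply sqrt_le_1_alt. unfold Rsqr. nra. Qed.
Lemma Cmod_le_of_sq z r : 0 <= r -> Re z * Re z + Im z * Im z <= r * r -> Cmod z <= r.
Proof. intros H1 H2. pose proof (Cmod_sq z). pose proof (Cmod_ge0 z). nra. Qed.
Lemma Cmod_ge_of_sq z r : 0 <= r -> r * r <= Re z * Re z + Im z * Im z -> r <= Cmod z.
Proof. intros H1 H2. pose proof (Cmod_sq z). pose proof (Cmod_ge0 z). nra. Qed.
Lemma Cmod_triangle z w : Cmod (Cadd z w) <= Cmod z + Cmod w.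
Proof.
  pose proof (Cmod_sq z) as Hz; pose proof (Cmod_sq w) as Hw.
  pose proof (Cmod_ge0 z) as Gz; pose proof (Cmod_ge0 w) as Gw.
  apply Cmod_le_of_sq. lra.
  simpl.
  assert (K: Re z * Re w + Im z * Im w <= Cmod z * Cmod w).
  { assert (K2: (Re z * Re w + Im z * Im w)^2 <= (Cmod z * Cmod w)^2).
    { replace ((Cmod z * Cmod w)^2) with ((Cmod z * Cmod z) * (Cmod w * Cmod w)) by ring.
      rewrite Hz, Hw. pose proof (pow2_ge_0 (Re z * Im w - Im z * Re w)). nra. }
    pose proof (Rmult_le_pos _ _ Gz Gw). destruct (Rle_dec (Re z * Re w + Im z * Im w) (Cmod z * Cmod w)); auto. nra. }
  nra.
Qed.
Lemma Cmod_opp z : Cmod (Copp z) = Cmod z.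
Proof. unfold Cmod; simpl; f_equal; ring. Qed.
Lemma Cmod_one : Cmod Cone = 1.
Proof. unfold Cmod; simpl. replace (1*1+0*0) with 1 by ring. apply sqrt_1. Qed.
Lemma Cmod_zero : Cmod Czero = 0.
Proof. unfold Cmod; simpl. replace (0*0+0*0) with 0 by ring. apply sqrt_0. Qed.
Lemma Cmod_eq0 z : Cmod z = 0 -> z = Czero.
Proof. intros H. pose proof (Cmod_sq z). rewrite H in H0. apply Ceq; simpl; nra. Qed.

Lemma Cinv_r z : z <> Czero -> Cmul z (Cinv z) = Cone.
Proof.
  intros H. assert (Re z * Re z + Im z * Im z <> 0).
  { intro E. apply H. apply Ceq; simpl; nra. }
  apply Ceq; simpl; field; auto.
Qed.
Lemma Cmod_Cinv z : z <> Czero -> Cmod (Cinv z) = / Cmod z.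
Proof.
  intros H. assert (Cmod z <> 0) by (intro E; apply H, Cmod_eq0, E).
  pose proof (Cmod_mul z (Cinv z)). rewrite Cinv_r, Cmod_one in H1 by auto.
  field_simplify_eq; auto. lra.
Qed.

Lemma Cpow_mod z n : Cmod (Cpow z n) = Cmod z ^ n.
Proof. induction n; simpl. apply Cmod_one. rewrite Cmod_mul, IHn. ring. Qed.
Lemma Cpow_add z n m : Cpow z (n + m) = Cmul (Cpow z n) (Cpow z m).
Proof. induction n; simpl. rewrite Cmul_1l; auto. rewrite IHn, Cmul_assoc; auto. Qed.
Lemma Cpow_mul z n m : Cpow z (n * m) = Cpow (Cpow z n) m.
Proof.
  revert n; induction m; intros n; simpl. rewrite Nat.mul_0_r; auto.
  rewrite Nat.mul_succ_r, Nat.add_comm, Cpow_add, IHm; auto.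
Qed.
Lemma Cpow_mulC z w n : Cpow (Cmul z w) n = Cmul (Cpow z n) (Cpow w n).
Proof. induction n; simpl. cx. rewrite IHn. cx. Qed.
Lemma Cpow_one n : Cpow Cone n = Cone.
Proof. induction n; simpl; auto. rewrite IHn; cx. Qed.


Section Alg.
Context {A : CstarAlgebra}.
Implicit Types a b c : A.

Definition sc (z : Cx) : A := cscal z cone.

Lemma add0r a : cadd a czero = a.
Proof. rewrite cadd_comm; apply cadd_0. Qed.
Lemma addNr a : cadd a (copp a) = czero.
Proof. rewrite cadd_comm; apply cadd_opp. Qed.
Lemma add_cancel_r a b c : cadd a c = cadd b c -> a = b.
Proof.
  intros H. rewrite <- (add0r a), <- (add0r b), <- (addNr c), !cadd_assoc, H. reflexivity.
Qed.
Lemma add_left_id a b : cadd a b = b -> a = czero.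
Proof. intros H. apply (add_cancel_r _ _ b). rewrite cadd_0. auto. Qed.
Lemma opp_unique a b : cadd a b = czero -> b = copp a.
Proof.
  intros H. apply (add_cancel_r _ _ a). rewrite cadd_opp, cadd_comm. auto.
Qed.
Lemma oppK a : copp (copp a) = a.
Proof. symmetry. apply opp_unique. apply cadd_opp. Qed.
Lemma opp0 : copp (@czero A) = czero.
Proof. symmetry. apply opp_unique. apply cadd_0. Qed.
Lemma opp_add a b : copp (cadd a b) = cadd (copp a) (copp b).
Proof.
  symmetry. apply opp_unique.
  replace (cadd (cadd a b) (cadd (copp a) (copp b)))
    with (cadd (cadd a (copp a)) (cadd b (copp b))).
  rewrite !addNr, cadd_0; auto.
  rewrite !cadd_assoc. f_equal. rewrite <- !cadd_assoc. f_equal. apply cadd_comm.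
Qed.
Lemma mul0r a : cmul a czero = czero.
Proof. apply (add_left_id _ (cmul a czero)). rewrite <- cmul_addr, cadd_0. auto. Qed.
Lemma mul0l a : cmul czero a = czero.
Proof. apply (add_left_id _ (cmul czero a)). rewrite <- cmul_addl, cadd_0. auto. Qed.
Lemma mulNl a b : cmul (copp a) b = copp (cmul a b).
Proof. apply opp_unique. rewrite <- cmul_addl, addNr, mul0l. auto. Qed.
Lemma mulNr a b : cmul a (copp b) = copp (cmul a b).
Proof. apply opp_unique. rewrite <- cmul_addr, addNr, mul0r. auto. Qed.
Lemma scal0 a : cscal Czero a = czero.
Proof.
  apply (add_left_id _ (cscal Czero a)). rewrite <- cscal_addC. f_equal. cx.
Qed.
Lemma scal_z0 z : cscal z (@czero A) = czero.
Proof. apply (add_left_id _ (cscal z czero)). rewrite <- cscal_addA, cadd_0. auto. Qed.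
Lemma scalN1 a : cscal (Copp Cone) a = copp a.
Proof.
  apply opp_unique. rewrite <- (cscal_1 a) at 1. rewrite <- cscal_addC.
  replace (Cadd Cone (Copp Cone)) with Czero by cx. apply scal0.
Qed.
Lemma scal_opp z a : cscal z (copp a) = copp (cscal z a).
Proof. apply opp_unique. rewrite <- cscal_addA, addNr. apply scal_z0. Qed.
Lemma norm0 : cnorm (@czero A) = 0.
Proof. rewrite <- (scal0 czero), cnorm_scal, Cmod_zero. ring. Qed.
Lemma norm_opp a : cnorm (copp a) = cnorm a.
Proof. rewrite <- scalN1, cnorm_scal, Cmod_opp, Cmod_one. ring. Qed.
Lemma norm_ge0 a : 0 <= cnorm a.
Proof.
  pose proof (cnorm_triangle a (copp a)) as H. rewrite addNr, norm0, norm_opp in H. lra.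
Qed.
Lemma sub_eq0 a b : csub a b = czero -> a = b.
Proof. unfold csub. intros H. apply opp_unique in H. rewrite <- (oppK a), <- H, oppK. auto. Qed.
Lemma norm_sub_eq0 a b : cnorm (csub a b) = 0 -> a = b.
Proof. intros H. apply sub_eq0, cnorm_eq0, H. Qed.
Lemma opp_sub a b : copp (csub a b) = csub b a.
Proof. unfold csub. rewrite opp_add, oppK, cadd_comm. auto. Qed.
Lemma norm_sub_sym a b : cnorm (csub a b) = cnorm (csub b a).
Proof. rewrite <- opp_sub, norm_opp. auto. Qed.
Lemma norm_sub_le a b : cnorm (csub a b) <= cnorm a + cnorm b.
Proof. unfold csub. rewrite <- (norm_opp b). apply cnorm_triangle. Qed.
Lemma norm_tri3 a b c : cnorm (csub a c) <= cnorm (csub a b) + cnorm (csub b c).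
Proof.
  replace (csub a c) with (cadd (csub a b) (csub b c)). apply cnorm_triangle.
  unfold csub. rewrite <- cadd_assoc. f_equal. rewrite cadd_assoc, cadd_opp, cadd_0. auto.
Qed.
Lemma norm_rev_tri a b : cnorm a - cnorm b <= cnorm (csub a b).
Proof.
  pose proof (cnorm_triangle (csub a b) b). unfold csub in *.
  rewrite <- cadd_assoc, cadd_opp, add0r in H. lra.
Qed.
Lemma one_neq0 : (@cone A) <> czero.
Proof. intros H. pose proof (@cnorm_one A). rewrite H, norm0 in H0. lra. Qed.

Lemma sc_mull z a : cmul (sc z) a = cscal z a.
Proof. unfold sc. rewrite <- cscal_mull, cmul_1l. auto. Qed.
Lemma sc_mulr z a : cmul a (sc z) = cscal z a.
Proof. unfold sc. rewrite <- cscal_mulr, cmul_1r. auto. Qed.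
Lemma sc_comm z a : cmul (sc z) a = cmul a (sc z).
Proof. rewrite sc_mull, sc_mulr. auto. Qed.
Lemma sc_mul z w : sc (Cmul z w) = cmul (sc z) (sc w).
Proof. rewrite sc_mull. unfold sc. rewrite cscal_assoc. auto. Qed.
Lemma sc_add z w : sc (Cadd z w) = cadd (sc z) (sc w).
Proof. unfold sc. apply cscal_addC. Qed.
Lemma sc_norm z : cnorm (sc z) = Cmod z.
Proof. unfold sc. rewrite cnorm_scal, cnorm_one. ring. Qed.
Lemma sc_one : sc Cone = cone.
Proof. apply cscal_1. Qed.
Lemma sc_zero : sc Czero = czero.
Proof. apply scal0. Qed.
Lemma sc_opp z : sc (Copp z) = copp (sc z).
Proof.
  replace (Copp z) with (Cmul (Copp Cone) z) by cx. unfold sc.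
  rewrite <- cscal_assoc, scalN1. auto.
Qed.
Lemma sc_sub z w : sc (Csub z w) = csub (sc z) (sc w).
Proof. unfold Csub, csub. rewrite sc_add, sc_opp. auto. Qed.
Lemma norm_scal z a : cnorm (cscal z a) = Cmod z * cnorm a.
Proof. apply cnorm_scal. Qed.
Lemma scal_mul_sc z a : cscal z a = cmul (sc z) a.
Proof. rewrite sc_mull. auto. Qed.

Lemma star0 : cstar (@czero A) = czero.
Proof.
  rewrite <- (scal0 czero) at 1. rewrite cstar_scal.
  replace (Cconj Czero) with Czero by cx. apply scal0.
Qed.
Lemma star_one : cstar (@cone A) = cone.
Proof.
  pose proof (cstar_mul (@cone A) (cstar cone)) as H. rewrite cstar_invol in H.
  rewrite !cmul_1l in H. rewrite cstar_invol in H. auto.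
Qed.
Lemma star_opp a : cstar (copp a) = copp (cstar a).
Proof. rewrite <- !scalN1, cstar_scal. f_equal. cx. Qed.
Lemma star_sc z : cstar (sc z) = sc (Cconj z).
Proof. unfold sc. rewrite cstar_scal, star_one. auto. Qed.
Lemma star_sub a b : cstar (csub a b) = csub (cstar a) (cstar b).
Proof. unfold csub. rewrite cstar_add, star_opp. auto. Qed.
Lemma norm_star_le a : cnorm a <= cnorm (cstar a).
Proof.
  pose proof (cnorm_cstar a). pose proof (cnorm_submult (cstar a) a).
  pose proof (norm_ge0 a). pose proof (norm_ge0 (cstar a)).
  destruct (Req_dec (cnorm a) 0). lra. nra.
Qed.
Lemma norm_star a : cnorm (cstar a) = cnorm a.
Proof.
  apply Rle_antisym. rewrite <- (cstar_invol a) at 2. apply norm_star_le. apply norm_star_le.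
Qed.
Lemma norm_mul3 a b c : cnorm (cmul (cmul a b) c) <= cnorm a * cnorm b * cnorm c.
Proof.
  eapply Rle_trans. apply cnorm_submult. apply Rmult_le_compat_r. apply norm_ge0.
  apply cnorm_submult.
Qed.
End Alg.



Lemma Rle_eps a b : (forall eps, eps > 0 -> a <= b + eps) -> a <= b.
Proof.
  intros H. destruct (Rle_dec a b); auto. specialize (H ((a - b)/2)). lra.
Qed.
Lemma Rle_eps0 a : 0 <= a -> (forall eps, eps > 0 -> a <= eps) -> a = 0.
Proof.
  intros H0 H. apply Rle_antisym; auto. apply Rle_eps. intros. rewrite Rplus_0_l. auto.
Qed.
Lemma pow_small q eps : 0 <= q < 1 -> eps > 0 -> exists N, forall n, (n >= N)%nat -> q ^ n < eps.
Proof.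
  intros Hq He. destruct (pow_lt_1_zero q) with (y := eps) as [N HN]. rewrite Rabs_right; lra. auto.
  exists N. intros n Hn. specialize (HN n Hn). rewrite Rabs_right in HN. auto.
  apply Rle_ge, pow_le. lra.
Qed.

Section Sums.
Context {A : CstarAlgebra}.
Implicit Types a b c : A.

Fixpoint asum (F : nat -> A) (n : nat) : A :=
  match n with O => czero | S k => cadd (asum F k) (F k) end.
Fixpoint rsum (f : nat -> R) (n : nat) : R :=
  match n with O => 0 | S k => rsum f k + f k end.
Fixpoint csum (f : nat -> Cx) (n : nat) : Cx :=
  match n with O => Czero | S k => Cadd (csum f k) (f k) end.

Lemma asum_ext F G n : (forall j, (j < n)%nat -> F j = G j) -> asum F n = asum G n.
Proof.
  induction n; simpl; intros H; auto. rewrite IHn by (intros; apply H; lia). rewrite H by lia. auto.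
Qed.
Lemma asum_add F G n : asum (fun j => cadd (F j) (G j)) n = cadd (asum F n) (asum G n).
Proof.
  induction n; simpl. rewrite cadd_0; auto. rewrite IHn.
  rewrite <- !cadd_assoc. f_equal. rewrite !cadd_assoc. f_equal. apply cadd_comm.
Qed.
Lemma asum_opp F n : asum (fun j => copp (F j)) n = copp (asum F n).
Proof. induction n; simpl. rewrite opp0; auto. rewrite IHn, opp_add. auto. Qed.
Lemma asum_sub F G n : asum (fun j => csub (F j) (G j)) n = csub (asum F n) (asum G n).
Proof. unfold csub. rewrite asum_add, asum_opp. auto. Qed.
Lemma asum_mull c F n : asum (fun j => cmul c (F j)) n = cmul c (asum F n).
Proof. induction n; simpl. rewrite mul0r; auto. rewrite IHn, cmul_addr. auto. Qed.
Lemma asum_mulr c F n : asum (fun j => cmul (F j) c) n = cmul (asum F n) c.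
Proof. induction n; simpl. rewrite mul0l; auto. rewrite IHn, cmul_addl. auto. Qed.
Lemma asum_sc f n : asum (fun j => sc (f j)) n = sc (csum f n).
Proof. induction n; simpl. rewrite sc_zero; auto. rewrite IHn, sc_add. auto. Qed.
Lemma asum_const0 n : asum (fun _ => czero) n = czero.
Proof. induction n; simpl; auto. rewrite IHn, cadd_0. auto. Qed.
Lemma asum_norm F n : cnorm (asum F n) <= rsum (fun j => cnorm (F j)) n.
Proof.
  induction n; simpl. rewrite norm0; lra.
  eapply Rle_trans. apply cnorm_triangle. lra.
Qed.
Lemma rsum_le f g n : (forall j, (j < n)%nat -> f j <= g j) -> rsum f n <= rsum g n.
Proof.
  induction n; simpl; intros H. lra. assert (f n <= g n) by (apply H; lia).
  assert (rsum f n <= rsum g n) by (apply IHn; intros; apply H; lia). lra.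
Qed.
Lemma rsum_const (c : R) n : rsum (fun _ => c) n = INR n * c.
Proof. induction n; simpl. ring. rewrite IHn. destruct n; simpl; ring. Qed.
Lemma asum_norm_le F n (c : R) : (forall j, (j < n)%nat -> cnorm (F j) <= c) -> cnorm (asum F n) <= INR n * c.
Proof.
  intros H. eapply Rle_trans. apply asum_norm. rewrite <- rsum_const. apply rsum_le. auto.
Qed.
Lemma asum_tele F n : asum (fun j => csub (F (S j)) (F j)) n = csub (F n) (F O).
Proof.
  induction n; simpl. unfold csub. rewrite addNr. auto.
  rewrite IHn. unfold csub. rewrite cadd_comm, <- cadd_assoc, (cadd_assoc (copp (F n))), cadd_opp, cadd_0. auto.
Qed.

Lemma cpow_succ_r (y : A) n : cpow y (S n) = cmul (cpow y n) y.
Proof.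
  induction n; simpl. rewrite cmul_1l, cmul_1r. auto.
  simpl in IHn. rewrite IHn at 1. rewrite cmul_assoc. auto.
Qed.
Lemma cpow_norm (y : A) n : cnorm (cpow y n) <= cnorm y ^ n.
Proof.
  induction n; simpl. rewrite cnorm_one; lra.
  eapply Rle_trans. apply cnorm_submult. apply Rmult_le_compat_l. apply norm_ge0. auto.
Qed.
Lemma cpow_add (y : A) n m : cpow y (n + m) = cmul (cpow y n) (cpow y m).
Proof. induction n; simpl. rewrite cmul_1l; auto. rewrite IHn, cmul_assoc. auto. Qed.

Definition inv (a : A) : A :=
  epsilon (inhabits (@czero A)) (fun b => cmul a b = cone /\ cmul b a = cone).
Lemma inv_spec a : invertible A a -> cmul a (inv a) = cone /\ cmul (inv a) a = cone.
Proof. intros [b Hb]. unfold inv. apply (epsilon_spec (inhabits (@czero A)) (fun b => cmul a b = cone /\ cmul b a = cone)). exists b; auto. Qed.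
Lemma inv_unique a b c : cmul a b = cone -> cmul c a = cone -> b = c.
Proof.
  intros H1 H2. rewrite <- (cmul_1l b), <- H2, <- cmul_assoc, H1, cmul_1r. auto.
Qed.
Lemma inv_eq a b : cmul a b = cone -> cmul b a = cone -> inv a = b.
Proof.
  intros H1 H2. assert (invertible A a) by (exists b; auto).
  destruct (inv_spec a H). symmetry. apply (inv_unique a b (inv a)); auto.
Qed.
Lemma inv_opp a b : cmul a b = cone -> cmul b a = cone ->
  cmul (copp a) (copp b) = cone /\ cmul (copp b) (copp a) = cone.
Proof. intros. rewrite !mulNl, !mulNr, !oppK. auto. Qed.
Lemma invertible_opp a : invertible A a -> invertible A (copp a).
Proof. intros [b [H1 H2]]. exists (copp b). apply inv_opp; auto. Qed.

Lemma sub_one_mul (y b : A) : cmul (csub cone y) b = csub b (cmul y b).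
Proof. unfold csub. rewrite cmul_addl, cmul_1l, mulNl. auto. Qed.
Lemma mul_sub_one (y b : A) : cmul b (csub cone y) = csub b (cmul b y).
Proof. unfold csub. rewrite cmul_addr, cmul_1r, mulNr. auto. Qed.

Lemma mul_subr c a b : cmul c (csub a b) = csub (cmul c a) (cmul c b).
Proof. unfold csub. rewrite cmul_addr, mulNr. auto. Qed.
Lemma mul_subl c a b : cmul (csub a b) c = csub (cmul a c) (cmul b c).
Proof. unfold csub. rewrite cmul_addl, mulNl. auto. Qed.

Lemma neumann (y : A) : cnorm y < 1 -> exists b,
  cmul (csub cone y) b = cone /\ cmul b (csub cone y) = cone /\ cnorm b <= 1 / (1 - cnorm y).
Proof.
  intros Hy. set (q := cnorm y). assert (Hq : 0 <= q) by apply norm_ge0.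
  assert (Eq : cnorm y = q) by reflexivity. clearbody q. rewrite Eq in *.
  assert (Hq1 : 1 - q <> 0) by (apply Rgt_not_eq; lra).
  set (S := asum (cpow y)).
  assert (HS1 : forall n, cmul (csub cone y) (S n) = csub cone (cpow y n)).
  { unfold S in *. induction n; simpl. rewrite mul0r. unfold csub. rewrite addNr. auto.
    unfold S in *. simpl. rewrite cmul_addr, IHn, sub_one_mul. unfold csub.
    rewrite <- cadd_assoc. f_equal. rewrite cadd_assoc, cadd_opp, cadd_0. auto. }
  assert (HS2 : forall n, cmul (S n) (csub cone y) = csub cone (cpow y n)).
  { unfold S in *. induction n; simpl. rewrite mul0l. unfold csub. rewrite addNr. auto.
    unfold S in *. simpl. rewrite cmul_addl, IHn, mul_sub_one, <- cpow_succ_r. unfold csub.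
    rewrite <- cadd_assoc. f_equal. simpl. rewrite cadd_assoc, cadd_opp, cadd_0. auto. }
  assert (HC : forall m k, cnorm (csub (S (k + m)%nat) (S m)) <= q ^ m * (1 - q ^ k) / (1 - q)).
  { intros m k. induction k; simpl.
    - unfold csub. rewrite addNr, norm0. replace (q ^ m * (1 - 1) / (1 - q)) with 0 by (field; auto). lra.
    - unfold S in *. simpl. replace (csub (cadd (asum (cpow y) (k + m)) (cpow y (k + m))) (asum (cpow y) m))
        with (cadd (csub (asum (cpow y) (k + m)) (asum (cpow y) m)) (cpow y (k + m))).
      eapply Rle_trans. apply cnorm_triangle.
      pose proof (cpow_norm y (k + m)). rewrite pow_add, Eq in H.
      replace (q ^ m * (1 - q * q ^ k) / (1 - q)) with (q ^ m * (1 - q ^ k) / (1 - q) + q ^ k * q ^ m) by (field; auto).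
      lra.
      unfold csub. rewrite <- !cadd_assoc. f_equal. apply cadd_comm. }
  assert (HCb : forall m k, cnorm (csub (S (k + m)%nat) (S m)) <= q ^ m / (1 - q)).
  { intros m k. eapply Rle_trans. apply HC. unfold Rdiv. apply Rmult_le_compat_r.
    apply Rlt_le, Rinv_0_lt_compat. lra. assert (0 <= q^k) by (apply pow_le; lra).
    assert (0 <= q^m) by (apply pow_le; lra). nra. }
  destruct (ccomplete S) as [l Hl].
  { intros eps Heps. destruct (pow_small q (eps * (1 - q))) as [N HN]. lra. nra.
    exists N. intros n m Hn Hm. fold (csub (S n) (S m)).
    assert (forall i j : nat, (i >= N)%nat -> (j >= i)%nat -> cnorm (csub (S j) (S i)) < eps).
    { intros i j Ha Hb. replace j with ((j - i) + i)%nat by lia. eapply Rle_lt_trans. apply HCb.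
      apply (Rmult_lt_reg_r (1 - q)). lra. unfold Rdiv. rewrite Rmult_assoc, Rinv_l by lra.
      rewrite Rmult_1_r. apply HN; lia. }
    destruct (Nat.le_ge_cases n m). rewrite norm_sub_sym. apply H; lia. apply H; lia. }
  assert (HSb : forall n, cnorm (S n) <= 1 / (1 - q)).
  { intros n. pose proof (HCb O n). rewrite Nat.add_0_r in H. simpl in H.
    unfold S at 2 in H; simpl in H. unfold csub in H. rewrite opp0, add0r in H. auto. }
  assert (Hlim : forall eps, eps > 0 -> exists n, cnorm (csub (S n) l) < eps /\ q ^ n < eps).
  { intros eps He. destruct (Hl eps He) as [N1 H1]. destruct (pow_small q eps) as [N2 H2]; auto.
    exists (N1 + N2)%nat. split. apply H1; lia. apply H2; lia. }
  assert (Hn1 : cnorm (csub cone y) <= 2).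
  { eapply Rle_trans. apply norm_sub_le. rewrite cnorm_one. lra. }
  exists l. split; [|split].
  - apply norm_sub_eq0, Rle_eps0. apply norm_ge0. intros eps He.
    destruct (Hlim (eps / 3)) as [n [Hn1' Hn2]]. lra.
    eapply Rle_trans. apply (norm_tri3 _ (cmul (csub cone y) (S n))).
    rewrite <- mul_subr, HS1.
    eapply Rle_trans. apply Rplus_le_compat. apply cnorm_submult. apply Req_le; reflexivity.
    replace (csub (csub cone (cpow y n)) cone) with (copp (cpow y n)).
    rewrite norm_opp. pose proof (cpow_norm y n). rewrite norm_sub_sym in Hn1'.
    pose proof (norm_ge0 (csub l (S n))). pose proof (norm_ge0 (csub cone y)). rewrite Eq in H. nra.
    unfold csub. rewrite cadd_comm, cadd_assoc, cadd_opp, cadd_0. auto.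
  - apply norm_sub_eq0, Rle_eps0. apply norm_ge0. intros eps He.
    destruct (Hlim (eps / 3)) as [n [Hn1' Hn2]]. lra.
    eapply Rle_trans. apply (norm_tri3 _ (cmul (S n) (csub cone y))).
    rewrite <- mul_subl, HS2.
    eapply Rle_trans. apply Rplus_le_compat. apply cnorm_submult. apply Req_le; reflexivity.
    replace (csub (csub cone (cpow y n)) cone) with (copp (cpow y n)).
    rewrite norm_opp. pose proof (cpow_norm y n). rewrite norm_sub_sym in Hn1'.
    pose proof (norm_ge0 (csub l (S n))). pose proof (norm_ge0 (csub cone y)). rewrite Eq in H. nra.
    unfold csub. rewrite cadd_comm, cadd_assoc, cadd_opp, cadd_0. auto.
  - apply Rle_eps. intros eps He. destruct (Hlim eps He) as [n [Hn1' _]].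
    pose proof (norm_rev_tri l (S n)). rewrite norm_sub_sym in H. specialize (HSb n). lra.
Qed.
End Sums.



Section Spec.
Context {A : CstarAlgebra}.
Implicit Types a b c e h : A.

Definition isinv a c := cmul a c = cone /\ cmul c a = cone.

Lemma perturb a b e m : isinv a b -> cnorm b <= m -> 0 < m -> cnorm e <= 1 / (2 * m) ->
  exists c, isinv (cadd a e) c /\ cnorm c <= 2 * m.
Proof.
  intros [Hab Hba] Hb Hm He.
  set (y := copp (cmul b e)).
  assert (Hy : cnorm y <= 1/2).
  { unfold y. rewrite norm_opp. eapply Rle_trans. apply cnorm_submult.
    pose proof (norm_ge0 b); pose proof (norm_ge0 e).
    apply Rle_trans with (m * (1 / (2 * m))). apply Rmult_le_compat; auto.
    right. field. lra. }
  destruct (neumann y) as [d [Hd1 [Hd2 Hd3]]]. lra.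
  assert (E : cadd a e = cmul a (csub cone y)).
  { rewrite mul_subr, cmul_1r. unfold y, csub. rewrite mulNr, oppK, cmul_assoc, Hab, cmul_1l. auto. }
  exists (cmul d b). split. split.
  - rewrite E, <- cmul_assoc, (cmul_assoc (csub cone y)), Hd1, cmul_1l. auto.
  - rewrite E, <- cmul_assoc, (cmul_assoc b), Hba, cmul_1l. auto.
  - eapply Rle_trans. apply cnorm_submult.
    assert (cnorm d <= 2).
    { eapply Rle_trans. apply Hd3. apply Rle_trans with (1 / (1 - 1/2)).
      apply Rmult_le_compat_l. lra. apply Rinv_le_contravar; lra. lra. }
    pose proof (norm_ge0 d); pose proof (norm_ge0 b). nra.
Qed.

Lemma gneumann (mu : Cx) a : cnorm a < Cmod mu ->
  exists c, isinv (csub (sc mu) a) c /\ cnorm c <= 1 / (Cmod mu - cnorm a).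
Proof.
  intros H. pose proof (norm_ge0 a).
  assert (Hmu : mu <> Czero) by (intro E; rewrite E, Cmod_zero in H; lra).
  set (nu := Cinv mu).
  assert (Hnu : Cmod nu = / Cmod mu) by (apply Cmod_Cinv; auto).
  assert (Hmn : Cmul mu nu = Cone) by (apply Cinv_r; auto).
  set (y := cmul (sc nu) a).
  assert (Hy : cnorm y = cnorm a / Cmod mu).
  { unfold y. rewrite sc_mull, norm_scal, Hnu. unfold Rdiv. ring. }
  destruct (neumann y) as [d [Hd1 [Hd2 Hd3]]].
  { rewrite Hy. apply (Rmult_lt_reg_r (Cmod mu)). lra. unfold Rdiv.
    rewrite Rmult_assoc, Rinv_l by lra. lra. }
  assert (E : csub (sc mu) a = cmul (sc mu) (csub cone y)).
  { rewrite mul_subr, cmul_1r. unfold y. rewrite cmul_assoc, <- sc_mul, Hmn, sc_one, cmul_1l. auto. }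
  exists (cmul d (sc nu)). split. split.
  - rewrite E, <- cmul_assoc, (cmul_assoc (csub cone y)), Hd1, cmul_1l, <- sc_mul, Hmn, sc_one. auto.
  - rewrite E, <- cmul_assoc, (cmul_assoc (sc nu)), <- sc_mul, Cmul_comm, Hmn, sc_one, cmul_1l. auto.
  - eapply Rle_trans. apply cnorm_submult. rewrite sc_norm, Hnu.
    rewrite Hy in Hd3.
    assert (0 < Cmod mu) by lra.
    replace (1 / (1 - cnorm a / Cmod mu)) with (Cmod mu / (Cmod mu - cnorm a)) in Hd3 by (field; lra).
    replace (1 / (Cmod mu - cnorm a)) with (Cmod mu / (Cmod mu - cnorm a) * / Cmod mu) by (field; lra).
    apply Rmult_le_compat_r. left; apply Rinv_0_lt_compat; lra. auto.
Qed.

Lemma invertible_iff a : invertible A a <-> exists c, isinv a c.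
Proof. split; intros [c Hc]; exists c; exact Hc. Qed.

Lemma spec_bound a z : spectrum A a z -> Cmod z <= cnorm a.
Proof.
  intros Hs. destruct (Rle_dec (Cmod z) (cnorm a)); auto. exfalso. apply Hs.
  destruct (gneumann z a) as [c [Hc _]]. lra.
  rewrite <- opp_sub. apply invertible_opp. exists c. exact Hc.
Qed.

Lemma Cmod_imag s : Cmod (mkC 0 s) = Rabs s.
Proof. rewrite <- Cmod_RC. unfold Cmod; simpl. f_equal. ring. Qed.

Lemma sa_res h (lam : Cx) : cstar h = h -> Im lam <> 0 ->
  exists c, isinv (csub (sc lam) h) c /\ cnorm c <= Cmod lam + (cnorm h * cnorm h + 1) / Rabs (Im lam).
Proof.
  intros Hh Hb. set (t := cnorm h). set (b := Im lam). set (s := (t * t + 1) / b).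
  assert (Hbs : b * s = t * t + 1) by (unfold s; field; auto).
  set (is := mkC 0 s). set (mu := Cadd lam is). set (a := cadd h (sc is)).
  assert (E : csub (sc lam) h = csub (sc mu) a).
  { unfold mu, a, csub. rewrite sc_add, opp_add, <- !cadd_assoc. f_equal.
    rewrite (cadd_comm (sc is)), <- cadd_assoc, cadd_opp, add0r. auto. }
  assert (Ha2 : cnorm a * cnorm a <= t * t + s * s).
  { rewrite <- cnorm_cstar. unfold a. rewrite cstar_add, Hh, star_sc.
    replace (Cconj is) with (Copp is) by (unfold is; cx).
    rewrite sc_opp, !cmul_addl, !cmul_addr, mulNl, mulNl, <- sc_comm, <- sc_mul.
    replace (Cmul is is) with (RC (- (s * s))) by (unfold is, RC; cx).
    replace (cadd (cadd (cmul h h) (cmul (sc is) h)) (cadd (copp (cmul (sc is) h)) (copp (sc (RC (- (s * s)))))))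
      with (cadd (cmul h h) (copp (sc (RC (- (s * s)))))).
    eapply Rle_trans. apply cnorm_triangle. rewrite norm_opp, sc_norm, Cmod_RC.
    pose proof (cnorm_submult h h). fold t in H. rewrite Rabs_left1.
    pose proof (Rle_0_sqr s). unfold Rsqr in H0. lra. pose proof (Rle_0_sqr s). unfold Rsqr in H0. lra.
    rewrite <- !cadd_assoc. f_equal. rewrite !cadd_assoc, addNr, cadd_0. auto. }
  assert (Hmu2 : Cmod mu * Cmod mu >= 2 * (t * t + 1) + s * s).
  { rewrite Cmod_sq. unfold mu, is; simpl. fold b. nra. }
  pose proof (norm_ge0 a). pose proof (Cmod_ge0 mu).
  assert (Hlt : cnorm a < Cmod mu).
  { destruct (Rlt_dec (cnorm a) (Cmod mu)); auto. pose proof (Rle_0_sqr t). unfold Rsqr in H1. nra. }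
  destruct (gneumann mu a Hlt) as [c [Hc Hcn]].
  exists c. split. rewrite E; auto.
  eapply Rle_trans. apply Hcn.
  assert (1 / (Cmod mu - cnorm a) <= Cmod mu).
  { assert (0 < Cmod mu - cnorm a) by lra.
    apply (Rmult_le_reg_r (Cmod mu - cnorm a)); auto. unfold Rdiv. rewrite Rmult_1_l, Rinv_l by lra.
    pose proof (Rle_0_sqr t). unfold Rsqr in H2. nra. }
  eapply Rle_trans. apply H1. unfold mu. eapply Rle_trans. apply Cmod_triangle.
  apply Rplus_le_compat_l. unfold is. rewrite Cmod_imag. unfold s. unfold Rdiv.
  rewrite Rabs_mult, Rabs_right. rewrite Rabs_inv. right; auto.
  pose proof (Rle_0_sqr t). unfold Rsqr in H2. lra.
Qed.

Lemma sa_spec_real h z : cstar h = h -> spectrum A h z -> Im z = 0.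
Proof.
  intros Hh Hs. destruct (Req_dec (Im z) 0); auto. exfalso. apply Hs.
  destruct (sa_res h z Hh H) as [c [Hc _]].
  rewrite <- opp_sub. apply invertible_opp. exists c. exact Hc.
Qed.
End Spec.


Definition th (N : nat) : R := 2 * PI / INR N.
Definition om (N : nat) : Cx := mkC (cos (th N)) (sin (th N)).

Lemma om_pow N j : Cpow (om N) j = mkC (cos (INR j * th N)) (sin (INR j * th N)).
Proof.
  induction j; simpl Cpow. simpl INR. rewrite Rmult_0_l, cos_0, sin_0. reflexivity.
  rewrite IHj. rewrite S_INR. replace ((INR j + 1) * th N) with (th N + INR j * th N) by ring.
  apply Ceq; simpl. rewrite cos_plus; ring. rewrite sin_plus; ring.
Qed.
Lemma om_pow_N N : (N > 0)%nat -> Cpow (om N) N = Cone.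
Proof.
  intros H. rewrite om_pow. unfold th. replace (INR N * (2 * PI / INR N)) with (2 * PI).
  rewrite cos_2PI, sin_2PI. reflexivity. field. apply not_0_INR. lia.
Qed.
Lemma om_pow_mod N j : Cmod (Cpow (om N) j) = 1.
Proof.
  rewrite om_pow. unfold Cmod; simpl. rewrite <- sqrt_1. f_equal.
  pose proof (sin2_cos2 (INR j * th N)). unfold Rsqr in H. lra.
Qed.
Lemma om_pow_neq1 N m : (0 < m < N)%nat -> Cpow (om N) m <> Cone.
Proof.
  intros H E. rewrite om_pow in E. injection E as E1 E2.
  assert (HN : 0 < INR N) by (apply lt_0_INR; lia).
  assert (Hm : 0 < INR m) by (apply lt_0_INR; lia).
  assert (Hmn : INR m < INR N) by (apply lt_INR; lia).
  assert (Ht : 0 < INR m * th N < 2 * PI).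
  { unfold th. split. pose proof PI_RGT_0. apply Rmult_lt_0_compat; auto. unfold Rdiv.
    apply Rmult_lt_0_compat; [lra|]. apply Rinv_0_lt_compat; auto.
    replace (INR m * (2 * PI / INR N)) with (2 * PI * (INR m / INR N)) by (field; lra).
    pose proof PI_RGT_0. rewrite <- (Rmult_1_r (2 * PI)) at 2. apply Rmult_lt_compat_l. lra.
    apply (Rmult_lt_reg_r (INR N)); auto. unfold Rdiv. rewrite Rmult_assoc, Rinv_l; lra. }
  destruct (sin_eq_O_2PI_0 (INR m * th N)) as [H0 | [H0 | H0]]; try lra.
  rewrite H0, cos_PI in E1. lra.
Qed.

Lemma Cpow_comm z m j : Cpow (Cpow z m) j = Cpow (Cpow z j) m.
Proof. rewrite <- !Cpow_mul, Nat.mul_comm. auto. Qed.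

Lemma csum_geom z N : Cmul (Csub z Cone) (csum (Cpow z) N) = Csub (Cpow z N) Cone.
Proof.
  induction N; simpl. cx. replace (Cmul (Csub z Cone) (Cadd (csum (Cpow z) N) (Cpow z N)))
    with (Cadd (Cmul (Csub z Cone) (csum (Cpow z) N)) (Cmul (Csub z Cone) (Cpow z N))) by cx.
  rewrite IHN. cx.
Qed.

Lemma roots_sum N m : (0 < m < N)%nat -> csum (fun j => Cpow (Cpow (om N) m) j) N = Czero.
Proof.
  intros H. set (z := Cpow (om N) m).
  assert (Hz : z <> Cone) by (apply om_pow_neq1; auto).
  assert (HzN : Cpow z N = Cone) by (unfold z; rewrite Cpow_comm, om_pow_N, Cpow_one; auto; lia).
  pose proof (csum_geom z N). rewrite HzN in H0.
  replace (Csub Cone Cone) with Czero in H0 by cx.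
  assert (Hz1 : Csub z Cone <> Czero).
  { intro E. apply Hz. apply Ceq. pose proof (f_equal Re E). simpl in H1; simpl; lra.
    pose proof (f_equal Im E). simpl in H1; simpl; lra. }
  transitivity (Cmul (Cmul (Cinv (Csub z Cone)) (Csub z Cone)) (csum (Cpow z) N)).
  rewrite (Cmul_comm (Cinv _)), Cinv_r by auto. rewrite Cmul_1l. reflexivity.
  rewrite <- Cmul_assoc, H0. cx.
Qed.

Lemma om_dist N : (N >= 4)%nat -> Cmod (Csub Cone (om N)) <= 2 * PI / INR N.
Proof.
  intros H. assert (HN : 4 <= INR N) by (replace 4 with (INR 4) by (simpl; ring); apply le_INR; lia).
  assert (Hth : 0 < th N <= PI / 2).
  { unfold th. pose proof PI_RGT_0. split. unfold Rdiv. apply Rmult_lt_0_compat. lra.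
    apply Rinv_0_lt_compat; lra. apply (Rmult_le_reg_r (INR N)). lra.
    unfold Rdiv. rewrite Rmult_assoc, Rinv_l by lra. nra. }
  pose proof (cos_bound (th N) 0). simpl (2 * 0 + 1)%nat in H0.
  destruct H0 as [H0 _]. pose proof PI_RGT_0. lra. lra.
  replace (cos_approx (th N) 1) with (1 - th N * th N / 2) in H0 by
    (unfold cos_approx, cos_term; simpl; field).
  apply Cmod_le_of_sq. unfold th in *. lra.
  simpl. pose proof (sin2_cos2 (th N)). unfold Rsqr in H1.
  fold (th N). nra.
Qed.


Lemma nat_above r : exists n, r < INR n.
Proof.
  destruct (archimed r) as [H _]. exists (Z.to_nat (up r)).
  destruct (Z_lt_le_dec (up r) 0).
  - apply IZR_lt in l. pose proof (pos_INR (Z.to_nat (up r))). simpl in l. lra.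
  - rewrite INR_IZR_INZ, Z2Nat.id; auto.
Qed.

Lemma csum_scale c g N : csum (fun j => Cmul c (g j)) N = Cmul c (csum g N).
Proof. induction N; simpl. cx. rewrite IHN. cx. Qed.
Lemma csum_const1 N : csum (fun _ => Cone) N = RC (INR N).
Proof. induction N; simpl csum. cx. rewrite IHN, S_INR. unfold RC. cx. Qed.

Section Core.
Context {A : CstarAlgebra}.
Variables (x : A) (rho M : R) (f : Cx -> A).
Hypothesis Hrho : 0 < rho.
Hypothesis HM : 0 <= M.
Hypothesis Hf : forall lam, rho <= Cmod lam -> isinv (csub (sc lam) x) (f lam) /\ cnorm (f lam) <= M.

Lemma sub_sub_cancel (p q y : A) : csub (csub p y) (csub q y) = csub p q.
Proof.
  unfold csub. rewrite opp_add, oppK. rewrite <- cadd_assoc. f_equal.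
  rewrite (cadd_comm (copp q)), cadd_assoc, cadd_opp, cadd_0. auto.
Qed.

Lemma res_id lam mu : rho <= Cmod lam -> rho <= Cmod mu ->
  csub (f lam) (f mu) = cmul (sc (Csub mu lam)) (cmul (f lam) (f mu)).
Proof.
  intros H1 H2. destruct (Hf lam H1) as [[Ha1 Ha2] _]. destruct (Hf mu H2) as [[Hb1 Hb2] _].
  transitivity (cmul (cmul (f lam) (csub (csub (sc mu) x) (csub (sc lam) x))) (f mu)).
  - rewrite mul_subr, mul_subl, Ha2, <- cmul_assoc, Hb1, cmul_1r, cmul_1l. auto.
  - rewrite sub_sub_cancel, <- sc_sub, <- sc_comm, <- cmul_assoc. auto.
Qed.

Lemma res_bound lam mu : rho <= Cmod lam -> rho <= Cmod mu ->
  cnorm (csub (f lam) (f mu)) <= Cmod (Csub mu lam) * (M * M).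
Proof.
  intros H1 H2. rewrite res_id by auto. eapply Rle_trans. apply cnorm_submult.
  rewrite sc_norm. apply Rmult_le_compat_l. apply Cmod_ge0.
  eapply Rle_trans. apply cnorm_submult. destruct (Hf _ H1) as [_ B1]. destruct (Hf _ H2) as [_ B2].
  apply Rmult_le_compat; auto; apply norm_ge0.
Qed.

Definition lamj (r : R) (N j : nat) : Cx := Cmul (RC r) (Cpow (om N) j).
Definition F (r : R) (N j : nat) : A := f (lamj r N j).
Definition Ssum (r : R) (N : nat) : A := asum (F r N) N.
Definition Tsum (r : R) (N : nat) : A :=
  asum (fun j => cmul (sc (Cpow (om N) j)) (cmul (F r N j) (F r N j))) N.

Lemma lamj_mod r N j : 0 <= r -> Cmod (lamj r N j) = r.
Proof. intros. unfold lamj. rewrite Cmod_mul, om_pow_mod, Cmod_RC, Rabs_right; lra. Qed.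

Lemma lamj_in r N j : rho <= r -> rho <= Cmod (lamj r N j).
Proof. intros. rewrite lamj_mod; lra. Qed.

Lemma add_sub_cancel (p q : A) : cadd q (csub p q) = p.
Proof. unfold csub. rewrite cadd_comm, <- cadd_assoc, cadd_opp, add0r. auto. Qed.

Lemma angular r N : rho <= r -> (N >= 2)%nat ->
  cnorm (Tsum r N) <= INR N * (r * Cmod (Csub Cone (om N))) * (M * M * M).
Proof.
  intros Hr HN. set (kap := Cmod (Csub Cone (om N))).
  assert (Hkap : 0 < kap).
  { pose proof (Cmod_ge0 (Csub Cone (om N))). destruct (Req_dec kap 0); [|unfold kap in *; lra].
    apply Cmod_eq0 in H0. exfalso. apply (om_pow_neq1 N 1). lia.
    simpl. rewrite Cmul_1r. apply Ceq. pose proof (f_equal Re H0). simpl in *; lra.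
    pose proof (f_equal Im H0). simpl in *; lra. }
  set (gc := Cmul (RC r) (Csub Cone (om N))).
  assert (Hgc : Cmod gc = r * kap). { unfold gc. rewrite Cmod_mul, Cmod_RC, Rabs_right; auto; lra. }
  set (D := fun j => csub (F r N (S j)) (F r N j)).
  assert (Hc : forall j, Csub (lamj r N j) (lamj r N (S j)) = Cmul gc (Cpow (om N) j)).
  { intros j. unfold gc, lamj. simpl Cpow. cx. }
  assert (HD : forall j, D j = cadd (cmul (sc gc) (cmul (sc (Cpow (om N) j)) (cmul (F r N j) (F r N j))))
                                  (cmul (sc (Csub (lamj r N j) (lamj r N (S j)))) (cmul (D j) (F r N j)))).
  { intros j. unfold D at 1, F at 1 2. rewrite res_id by (apply lamj_in; auto). fold (F r N (S j)) (F r N j).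
    rewrite <- (add_sub_cancel (F r N (S j)) (F r N j)) at 1. fold (D j).
    rewrite cmul_addl, cmul_addr. f_equal. rewrite Hc, sc_mul, <- cmul_assoc. auto. }
  assert (Hsum : asum D N = czero).
  { unfold D. rewrite asum_tele. unfold F, lamj. rewrite om_pow_N by lia. simpl Cpow.
    unfold csub. apply addNr. }
  assert (E : cmul (sc gc) (Tsum r N) =
     copp (asum (fun j => cmul (sc (Csub (lamj r N j) (lamj r N (S j)))) (cmul (D j) (F r N j))) N)).
  { apply opp_unique. rewrite <- Hsum. unfold Tsum. rewrite <- asum_mull, <- asum_add.
    apply asum_ext. intros j _. symmetry. rewrite HD at 1. apply cadd_comm. }
  assert (HE : cnorm (cmul (sc gc) (Tsum r N)) <= INR N * ((r * kap) * (((r * kap) * (M * M)) * M))).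
  { rewrite E, norm_opp. apply asum_norm_le. intros j Hj.
    eapply Rle_trans. apply cnorm_submult. rewrite sc_norm, Hc, Cmod_mul, om_pow_mod, Hgc, Rmult_1_r.
    assert (0 <= r * kap) by (apply Rmult_le_pos; lra).
    apply Rmult_le_compat_l; auto. eapply Rle_trans. apply cnorm_submult.
    apply Rmult_le_compat. apply norm_ge0. apply norm_ge0.
    unfold D. eapply Rle_trans. apply res_bound; apply lamj_in; auto.
    replace (Csub (lamj r N j) (lamj r N (S j))) with (Cmul gc (Cpow (om N) j)) by (symmetry; apply Hc).
    rewrite Cmod_mul, om_pow_mod, Hgc, Rmult_1_r. lra.
    apply Hf, lamj_in; auto. }
  rewrite sc_mull, norm_scal, Hgc in HE.
  assert (0 < r * kap) by (apply Rmult_lt_0_compat; lra).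
  apply (Rmult_le_reg_l (r * kap)); auto.
  pose proof (pos_INR N). nra.
Qed.

Lemma radial r d N : rho <= r -> 0 <= d -> (N >= 2)%nat ->
  cnorm (csub (Ssum (r + d) N) (Ssum r N)) <=
  INR N * d * (r * Cmod (Csub Cone (om N)) + d) * (M * M * M).
Proof.
  intros Hr Hd HN. set (kap := Cmod (Csub Cone (om N))).
  assert (Hin : forall j, rho <= Cmod (lamj r N j)) by (intros; apply lamj_in; auto).
  assert (Hin' : forall j, rho <= Cmod (lamj (r + d) N j)) by (intros; apply lamj_in; lra).
  assert (Hc : forall j, Csub (lamj r N j) (lamj (r + d) N j) = Cmul (RC (- d)) (Cpow (om N) j)).
  { intros j. unfold lamj, RC. cx. }
  assert (E : csub (Ssum (r + d) N) (Ssum r N) =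
    cadd (cmul (sc (RC (- d))) (Tsum r N))
         (asum (fun j => cmul (sc (Csub (lamj r N j) (lamj (r + d) N j)))
                  (cmul (csub (F (r + d) N j) (F r N j)) (F r N j))) N)).
  { unfold Ssum, Tsum. rewrite <- asum_sub, <- asum_mull, <- asum_add. apply asum_ext. intros j _.
    unfold F at 1 2. rewrite res_id by auto. fold (F (r + d) N j) (F r N j).
    rewrite <- (add_sub_cancel (F (r + d) N j) (F r N j)) at 1.
    rewrite cmul_addl, cmul_addr. f_equal. rewrite Hc, sc_mul, <- cmul_assoc. auto. }
  rewrite E. eapply Rle_trans. apply cnorm_triangle.
  pose proof (angular r N Hr HN) as HT. fold kap in HT.
  assert (H1 : cnorm (cmul (sc (RC (- d))) (Tsum r N)) <= d * (INR N * (r * kap) * (M * M * M))).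
  { rewrite sc_mull, norm_scal, Cmod_RC, Rabs_left1 by lra. rewrite Ropp_involutive.
    apply Rmult_le_compat_l; auto. }
  assert (H2 : cnorm (asum (fun j => cmul (sc (Csub (lamj r N j) (lamj (r + d) N j)))
                  (cmul (csub (F (r + d) N j) (F r N j)) (F r N j))) N) <= INR N * (d * ((d * (M * M)) * M))).
  { apply asum_norm_le. intros j _. eapply Rle_trans. apply cnorm_submult.
    rewrite sc_norm, Hc, Cmod_mul, om_pow_mod, Cmod_RC, Rabs_left1, Ropp_involutive, Rmult_1_r by lra.
    apply Rmult_le_compat_l; auto. eapply Rle_trans. apply cnorm_submult.
    apply Rmult_le_compat. apply norm_ge0. apply norm_ge0.
    unfold F. eapply Rle_trans. apply res_bound; auto.
    rewrite <- Cmod_opp. replace (Copp (Csub (lamj r N j) (lamj (r + d) N j))) with (Cmul (RC d) (Cpow (om N) j)).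
    rewrite Cmod_mul, om_pow_mod, Cmod_RC, Rabs_right by lra. lra.
    unfold lamj, RC. cx. apply Hf; auto. }
  pose proof (pos_INR N). nra.
Qed.

Lemma radial_iter R N K : rho <= R -> (N >= 2)%nat -> (K >= 1)%nat ->
  cnorm (csub (Ssum R N) (Ssum rho N)) <=
  INR N * (R - rho) * (R * Cmod (Csub Cone (om N)) + (R - rho) / INR K) * (M * M * M).
Proof.
  intros HR HN HK. set (kap := Cmod (Csub Cone (om N))). set (d := (R - rho) / INR K).
  assert (HKp : 0 < INR K) by (apply lt_0_INR; lia).
  assert (Hd : 0 <= d) by (unfold d; apply Rmult_le_pos; [lra | left; apply Rinv_0_lt_compat; auto]).
  assert (HKd : INR K * d = R - rho) by (unfold d; field; lra).
  assert (Hkap : 0 <= kap) by apply Cmod_ge0.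
  assert (forall i, (i <= K)%nat -> cnorm (csub (Ssum (rho + INR i * d) N) (Ssum rho N)) <=
            INR i * (INR N * d * (R * kap + d) * (M * M * M))).
  { induction i; intros Hi.
    - simpl. rewrite Rmult_0_l, Rplus_0_r. unfold csub. rewrite addNr, norm0. lra.
    - assert (Hi' : INR i + 1 <= INR K) by (rewrite <- S_INR; apply le_INR; lia).
      assert (HiR : rho + INR i * d <= R) by nra.
      pose proof (pos_INR i).
      eapply Rle_trans. apply (norm_tri3 _ (Ssum (rho + INR i * d) N)).
      rewrite S_INR. replace (rho + (INR i + 1) * d) with ((rho + INR i * d) + d) by ring.
      eapply Rle_trans. apply Rplus_le_compat. apply radial; auto. nra. apply IHi; lia.
      fold kap. assert (0 <= M * M * M) by (apply Rmult_le_pos; [apply Rmult_le_pos|]; auto).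
      pose proof (pos_INR N).
      assert ((rho + INR i * d) * kap <= R * kap) by (apply Rmult_le_compat_r; auto).
      assert (0 <= INR N * d) by (apply Rmult_le_pos; auto).
      assert (INR N * d * ((rho + INR i * d) * kap + d) * (M * M * M) <= INR N * d * (R * kap + d) * (M * M * M)).
      { apply Rmult_le_compat_r; auto. apply Rmult_le_compat_l; auto. lra. }
      lra. }
  specialize (H K (le_n K)). replace (rho + INR K * d) with R in H by lra.
  eapply Rle_trans. apply H. right. fold d. rewrite <- HKd. ring.
Qed.

Lemma at_R R N : rho <= R -> (N >= 2)%nat ->
  cnorm (Ssum R N) <= INR N * (/ R * (cnorm x * M)).
Proof.
  intros HR HN. set (nu := fun j => Cmul (RC (/ R)) (Cpow (Cpow (om N) (N - 1)) j)).
  assert (HRp : 0 < R) by lra.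
  assert (Hnu : forall j, Cmul (lamj R N j) (nu j) = Cone).
  { intros j. unfold lamj, nu.
    replace (Cmul (Cmul (RC R) (Cpow (om N) j)) (Cmul (RC (/ R)) (Cpow (Cpow (om N) (N - 1)) j)))
      with (Cmul (Cmul (RC R) (RC (/ R))) (Cmul (Cpow (om N) j) (Cpow (Cpow (om N) (N - 1)) j))) by cx.
    rewrite <- Cpow_mulC. replace (Cmul (om N) (Cpow (om N) (N - 1))) with (Cpow (om N) (S (N - 1))) by reflexivity.
    replace (S (N - 1)) with N by lia.
    rewrite om_pow_N by lia. rewrite Cpow_one. unfold RC. apply Ceq; simpl; field; lra. }
  assert (Hsnu : csum nu N = Czero).
  { unfold nu. rewrite csum_scale, roots_sum by lia. cx. }
  assert (Hnum : forall j, Cmod (nu j) = / R).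
  { intros j. unfold nu. rewrite Cmod_mul, Cmod_RC, Rabs_right, <- Cpow_mul, om_pow_mod. ring.
    left; apply Rinv_0_lt_compat; auto. }
  assert (E : Ssum R N = cadd (asum (fun j => sc (nu j)) N)
                              (asum (fun j => cmul (sc (nu j)) (cmul x (F R N j))) N)).
  { unfold Ssum. rewrite <- asum_add. apply asum_ext. intros j _.
    destruct (Hf (lamj R N j)) as [[H1 H2] _]. apply lamj_in; lra.
    rewrite mul_subl in H1. fold (F R N j) in *.
    assert (E1 : cmul (sc (lamj R N j)) (F R N j) = cadd cone (cmul x (F R N j))).
    { rewrite <- H1. unfold csub. rewrite <- cadd_assoc, cadd_opp, add0r. auto. }
    transitivity (cmul (sc (nu j)) (cadd cone (cmul x (F R N j)))).
    rewrite <- E1, cmul_assoc, <- sc_mul, Cmul_comm, Hnu, sc_one, cmul_1l. auto.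
    rewrite cmul_addr, cmul_1r. auto. }
  rewrite E, asum_sc, Hsnu, sc_zero, cadd_0. apply asum_norm_le. intros j _.
  eapply Rle_trans. apply cnorm_submult. rewrite sc_norm, Hnum.
  apply Rmult_le_compat_l. left; apply Rinv_0_lt_compat; auto.
  eapply Rle_trans. apply cnorm_submult. apply Rmult_le_compat_l. apply norm_ge0.
  apply Hf, lamj_in; lra.
Qed.

Fixpoint P (lam : Cx) (k : nat) : A :=
  match k with O => cone | S k' => cadd (cmul (sc lam) (P lam k')) (cpow x (S k')) end.

Lemma res_lin lam : rho <= Cmod lam -> cmul (sc lam) (f lam) = cadd cone (cmul x (f lam)).
Proof.
  intros H. destruct (Hf lam H) as [[H1 H2] _]. rewrite mul_subl in H1.
  rewrite <- H1. unfold csub. rewrite <- cadd_assoc, cadd_opp, add0r. auto.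
Qed.

Lemma P_id lam k : rho <= Cmod lam ->
  cmul (sc (Cpow lam (S k))) (f lam) = cadd (P lam k) (cmul (cpow x (S k)) (f lam)).
Proof.
  intros H. induction k.
  - simpl. rewrite Cmul_1r, cmul_1r. apply res_lin; auto.
  - change (Cpow lam (S (S k))) with (Cmul lam (Cpow lam (S k))).
    rewrite sc_mul, <- cmul_assoc, IHk, cmul_addr. simpl P. rewrite <- cadd_assoc. f_equal.
    rewrite cmul_assoc, sc_comm, <- cmul_assoc, res_lin by auto.
    rewrite cmul_addr, cmul_1r. f_equal. rewrite cmul_assoc, <- cpow_succ_r. auto.
Qed.


Lemma csum_ext g h N : (forall j, g j = h j) -> csum g N = csum h N.
Proof. intros H. induction N; simpl; auto. rewrite IHN, H. auto. Qed.

Lemma csum_lam_pow r N m : csum (fun j => Cpow (lamj r N j) m) N =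
   Cmul (Cpow (RC r) m) (csum (fun j => Cpow (Cpow (om N) m) j) N).
Proof.
  rewrite <- csum_scale. apply csum_ext. intros j. unfold lamj. rewrite Cpow_mulC, Cpow_comm. auto.
Qed.

Lemma sum_lam_zero r N m : (0 < m < N)%nat -> csum (fun j => Cpow (lamj r N j) m) N = Czero.
Proof. intros H. rewrite csum_lam_pow, roots_sum by auto. cx. Qed.

Lemma L1 r N k : forall m, (1 <= m)%nat -> (m + k < N)%nat -> rho <= r ->
  asum (fun j => cmul (sc (Cpow (lamj r N j) m)) (P (lamj r N j) k)) N = czero.
Proof.
  induction k; intros m Hm HmN Hr.
  - simpl P. rewrite (asum_ext _ (fun j => sc (Cpow (lamj r N j) m))).
    rewrite asum_sc, sum_lam_zero, sc_zero by lia. auto. intros; apply cmul_1r.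
  - simpl P. rewrite (asum_ext _ (fun j => cadd (cmul (sc (Cpow (lamj r N j) (S m))) (P (lamj r N j) k))
                                            (cmul (sc (Cpow (lamj r N j) m)) (cpow x (S k))))).
    rewrite asum_add, IHk, asum_mulr, asum_sc, sum_lam_zero, sc_zero, mul0l, cadd_0 by (first [lia | lra | auto]). auto.
    intros j _. rewrite cmul_addr. f_equal. simpl Cpow. rewrite cmul_assoc, <- sc_mul, Cmul_comm. auto.
Qed.

Lemma L0 r N k : (k < N)%nat -> rho <= r ->
  asum (fun j => P (lamj r N j) k) N = cmul (sc (RC (INR N))) (cpow x k).
Proof.
  intros Hk Hr. destruct k.
  - simpl. rewrite cmul_1r, <- csum_const1, <- asum_sc, sc_one. auto.
  - simpl P. rewrite asum_add.
    rewrite (asum_ext _ (fun j => cmul (sc (Cpow (lamj r N j) 1)) (P (lamj r N j) k))).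
    rewrite L1 by (first [lia | lra | auto]). rewrite cadd_0.
    rewrite (asum_ext _ (fun j => cmul (sc Cone) (cpow x (S k)))), asum_mulr, asum_sc, csum_const1. auto.
    intros; rewrite sc_one, cmul_1l; auto.
    intros; simpl Cpow; rewrite Cmul_1r; auto.
Qed.

Lemma addK (a b : A) : csub (cadd a b) b = a.
Proof. unfold csub. rewrite <- cadd_assoc, addNr, add0r. auto. Qed.

Lemma core k : cnorm (cpow x k) <= rho ^ (k + 1) * M.
Proof.
  apply Rle_eps. intros eps He.
  set (X := cnorm x). set (B := X ^ (k + 1)).
  assert (HX : 0 <= X) by apply norm_ge0. assert (HB : 0 <= B) by (apply pow_le; auto).
  set (Rb := rho + 1 + 2 * B * X * M / eps).
  assert (HBXM : 0 <= B * X * M) by (apply Rmult_le_pos; [apply Rmult_le_pos|]; auto).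
  assert (HRb : rho + 1 <= Rb).
  { unfold Rb. assert (0 <= 2 * B * X * M / eps). unfold Rdiv. apply Rmult_le_pos. lra.
    left; apply Rinv_0_lt_compat; auto. lra. }
  assert (HRb2 : B * (/ Rb * (X * M)) <= eps / 2).
  { assert (0 < Rb) by lra. replace (B * (/ Rb * (X * M))) with (B * X * M / Rb) by (field; lra).
    apply (Rmult_le_reg_r Rb); auto. unfold Rdiv. rewrite Rmult_assoc, Rinv_l, Rmult_1_r by lra.
    assert (2 * B * X * M / eps <= Rb) by (unfold Rb; lra).
    apply (Rmult_le_compat_r eps) in H0; [|lra]. unfold Rdiv in H0.
    rewrite Rmult_assoc, Rinv_l, Rmult_1_r in H0 by lra. nra. }
  set (C := B * (Rb - rho) * (Rb * (2 * PI) + (Rb - rho)) * (M * M * M)).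
  assert (HC : 0 <= C).
  { unfold C. pose proof PI_RGT_0. apply Rmult_le_pos; [|apply Rmult_le_pos; [apply Rmult_le_pos|]; auto].
    apply Rmult_le_pos. apply Rmult_le_pos; auto; lra. nra. }
  destruct (nat_above (2 * C / eps)) as [N0 HN0].
  set (N := (N0 + k + 4)%nat).
  assert (HN : (N >= 4)%nat) by (unfold N; lia).
  assert (HNk : (k + 1 < N)%nat) by (unfold N; lia).
  assert (HNp : 0 < INR N) by (apply lt_0_INR; lia).
  assert (HN0N : INR N0 <= INR N) by (apply le_INR; unfold N; lia).
  assert (HCN : C / INR N <= eps / 2).
  { apply (Rmult_le_reg_r (INR N)); auto. unfold Rdiv. rewrite Rmult_assoc, Rinv_l, Rmult_1_r by lra.
    assert (2 * C / eps < INR N) by lra. apply (Rmult_lt_compat_r eps) in H; [|lra].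
    unfold Rdiv in H. rewrite Rmult_assoc, Rinv_l, Rmult_1_r in H by lra. lra. }
  assert (Hid : asum (fun j => cmul (sc (Cpow (lamj rho N j) (S k))) (f (lamj rho N j))) N =
                cadd (cmul (sc (RC (INR N))) (cpow x k)) (cmul (cpow x (S k)) (Ssum rho N))).
  { rewrite (asum_ext _ (fun j => cadd (P (lamj rho N j) k) (cmul (cpow x (S k)) (f (lamj rho N j))))).
    rewrite asum_add, L0, asum_mull by (first [lia | lra | auto]). auto.
    intros j _. apply P_id. apply lamj_in; lra. }
  assert (Hlhs : cnorm (asum (fun j => cmul (sc (Cpow (lamj rho N j) (S k))) (f (lamj rho N j))) N) <=
                 INR N * (rho ^ (k + 1) * M)).
  { apply asum_norm_le. intros j _. eapply Rle_trans. apply cnorm_submult.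
    rewrite sc_norm, Cpow_mod. rewrite lamj_mod by lra. rewrite Nat.add_1_r.
    apply Rmult_le_compat_l. apply pow_le; lra. apply Hf, lamj_in; lra. }
  rewrite Hid in Hlhs.
  assert (HS : cnorm (Ssum rho N) <= INR N * (/ Rb * (X * M)) + INR N * (Rb - rho) * (Rb * (2 * PI / INR N) + (Rb - rho) / INR N) * (M * M * M)).
  { pose proof (at_R Rb N ltac:(lra) ltac:(lia)) as H1.
    pose proof (radial_iter Rb N N ltac:(lra) ltac:(lia) ltac:(lia)) as H2.
    pose proof (norm_rev_tri (Ssum rho N) (Ssum Rb N)) as H3. rewrite norm_sub_sym in H3.
    pose proof (om_dist N HN) as H4.
    assert (0 <= M * M * M) by (apply Rmult_le_pos; [apply Rmult_le_pos|]; auto).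
    assert (INR N * (Rb - rho) * (Rb * Cmod (Csub Cone (om N)) + (Rb - rho) / INR N) * (M * M * M) <=
            INR N * (Rb - rho) * (Rb * (2 * PI / INR N) + (Rb - rho) / INR N) * (M * M * M)).
    { apply Rmult_le_compat_r; auto. apply Rmult_le_compat_l. apply Rmult_le_pos; lra.
      apply Rplus_le_compat_r. apply Rmult_le_compat_l; lra. }
    fold X in H1. lra. }
  assert (Heq : B * (INR N * (Rb - rho) * (Rb * (2 * PI / INR N) + (Rb - rho) / INR N) * (M * M * M)) = INR N * (C / INR N)).
  { unfold C. field. lra. }
  assert (HY : cnorm (cmul (cpow x (S k)) (Ssum rho N)) <= B * cnorm (Ssum rho N)).
  { eapply Rle_trans. apply cnorm_submult. apply Rmult_le_compat_r. apply norm_ge0.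
    unfold B, X. rewrite Nat.add_1_r. apply cpow_norm. }
  assert (HBS : B * cnorm (Ssum rho N) <= INR N * (eps / 2) + INR N * (eps / 2)).
  { apply Rle_trans with (B * (INR N * (/ Rb * (X * M)) + INR N * (Rb - rho) * (Rb * (2 * PI / INR N) + (Rb - rho) / INR N) * (M * M * M))).
    apply Rmult_le_compat_l; auto. rewrite Rmult_plus_distr_l, Heq.
    apply Rplus_le_compat. replace (B * (INR N * (/ Rb * (X * M)))) with (INR N * (B * (/ Rb * (X * M)))) by ring.
    apply Rmult_le_compat_l; lra. apply Rmult_le_compat_l; lra. }
  assert (Hxk : cnorm (cmul (sc (RC (INR N))) (cpow x k)) = INR N * cnorm (cpow x k)).
  { rewrite sc_mull, norm_scal, Cmod_RC, Rabs_right; lra. }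
  assert (Htri : cnorm (cmul (sc (RC (INR N))) (cpow x k)) <=
     cnorm (cadd (cmul (sc (RC (INR N))) (cpow x k)) (cmul (cpow x (S k)) (Ssum rho N))) +
     cnorm (cmul (cpow x (S k)) (Ssum rho N))).
  { rewrite <- (addK (cmul (sc (RC (INR N))) (cpow x k)) (cmul (cpow x (S k)) (Ssum rho N))) at 1.
    apply norm_sub_le. }
  rewrite Hxk in Htri.
  apply (Rmult_le_reg_l (INR N)); auto. lra.
Qed.
End Core.


Lemma bern q n : 1 <= q -> 1 + INR n * (q - 1) <= q ^ n.
Proof.
  intros H. induction n. simpl; lra. rewrite S_INR. simpl.
  pose proof (pos_INR n).
  assert (0 <= (q - 1) * (q ^ n - (1 + INR n * (q - 1)))) by (apply Rmult_le_pos; lra).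
  assert (0 <= INR n * (q - 1) * (q - 1)) by (apply Rmult_le_pos; [apply Rmult_le_pos|]; lra).
  nra.
Qed.
Lemma le_pow2S j : (S j <= 2 ^ j)%nat.
Proof. induction j; simpl; lia. Qed.
Lemma le_pow2 j : (j <= 2 ^ j)%nat.
Proof. pose proof (le_pow2S j). lia. Qed.

Section Pos.
Context {A : CstarAlgebra}.
Implicit Types a b c h : A.

Lemma sa_pow_star h n : cstar h = h -> cstar (cpow h n) = cpow h n.
Proof.
  intros H. induction n; simpl. apply star_one. rewrite cstar_mul, IHn, H, <- cpow_succ_r. auto.
Qed.
Lemma sa_pow2 h j : cstar h = h -> cnorm (cpow h (2 ^ j)) = cnorm h ^ (2 ^ j).
Proof.
  intros H. induction j. simpl. rewrite cmul_1r. ring.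
  replace (2 ^ S j)%nat with (2 ^ j + 2 ^ j)%nat by (simpl; lia).
  rewrite cpow_add, <- (sa_pow_star h (2 ^ j)) at 1 by auto. rewrite cnorm_cstar, IHj, <- pow_add. auto.
Qed.

Lemma sub_add_sub (p l h : A) : cadd (csub p h) (csub l p) = csub l h.
Proof.
  unfold csub. rewrite cadd_comm, <- cadd_assoc, (cadd_assoc (copp p)), cadd_opp, cadd_0. auto.
Qed.

Lemma sc_RC_star r : cstar (@sc A (RC r)) = sc (RC r).
Proof. rewrite star_sc. f_equal. unfold RC; cx. Qed.

Lemma sa_norm_spec h : cstar h = h -> spectrum A h (RC (cnorm h)) \/ spectrum A h (RC (- cnorm h)).
Proof.
  intros Hh. set (t := cnorm h).
  destruct (classic (spectrum A h (RC t))) as [S1|S1]; auto.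
  destruct (classic (spectrum A h (RC (- t)))) as [S2|S2]; auto. exfalso.
  unfold spectrum in S1, S2. apply NNPP in S1. apply NNPP in S2.
  destruct S1 as [b1 Hb1]. destruct S2 as [b2 Hb2].
  assert (Ht : 0 <= t) by apply norm_ge0.
  destruct (Req_dec t 0) as [Ht0|Ht0].
  { assert (h = czero) by (apply cnorm_eq0; auto). subst h.
    rewrite Ht0 in Hb1. replace (RC 0) with Czero in Hb1 by (unfold RC; cx).
    change (cscal Czero cone) with (@sc A Czero) in Hb1.
    rewrite sc_zero in Hb1. unfold csub in Hb1. rewrite addNr, mul0l in Hb1.
    destruct Hb1 as [E _]. apply (@one_neq0 A). auto. }
  assert (Htp : 0 < t) by lra.
  set (m0 := cnorm b1 + cnorm b2 + 1).
  assert (Hm0 : 0 < m0) by (unfold m0; pose proof (norm_ge0 b1); pose proof (norm_ge0 b2); lra).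
  set (eta := Rmin (1 / (2 * m0)) t).
  assert (Heta : 0 < eta) by (unfold eta; apply Rmin_glb_lt; auto; unfold Rdiv; apply Rmult_lt_0_compat; [lra| apply Rinv_0_lt_compat; lra]).
  assert (Heta1 : eta <= 1 / (2 * m0)) by apply Rmin_l.
  assert (Heta2 : eta <= t) by apply Rmin_r.
  set (rho := t - eta / 2).
  assert (Hrho : 0 < rho) by (unfold rho; lra).
  set (Mb := 2 / eta + 2 * m0 + (t + eta / 2 + (t * t + 1) * (4 / eta))).
  assert (Hpos4 : 0 < 4 / eta) by (unfold Rdiv; apply Rmult_lt_0_compat; [lra | apply Rinv_0_lt_compat; lra]).
  assert (Hpos2 : 0 < 2 / eta) by (unfold Rdiv; apply Rmult_lt_0_compat; [lra | apply Rinv_0_lt_compat; lra]).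
  assert (HMb : 0 <= Mb) by (unfold Mb; pose proof (Rle_0_sqr t); unfold Rsqr in H; nra).
  assert (I1 : isinv (csub (sc (RC t)) h) (copp b1) /\ cnorm (copp b1) <= m0).
  { rewrite <- opp_sub. split. apply inv_opp; apply Hb1. rewrite norm_opp. unfold m0.
    pose proof (norm_ge0 b2); lra. }
  assert (I2 : isinv (csub (sc (RC (- t))) h) (copp b2) /\ cnorm (copp b2) <= m0).
  { rewrite <- opp_sub. split. apply inv_opp; apply Hb2. rewrite norm_opp. unfold m0.
    pose proof (norm_ge0 b1); lra. }
  assert (Hex : forall lam, rho <= Cmod lam -> exists c, isinv (csub (sc lam) h) c /\ cnorm c <= Mb).
  { intros lam Hlam.
    destruct (Rle_dec (t + eta / 2) (Cmod lam)) as [CA|CA].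
    - destruct (gneumann lam h) as [c [Hc Hcn]]. fold t; lra. exists c. split; auto.
      eapply Rle_trans. apply Hcn. fold t. apply Rle_trans with (2 / eta).
      unfold Rdiv. rewrite Rmult_1_l. apply Rle_trans with (/ (eta / 2)).
      apply Rinv_le_contravar; lra. right; field; lra.
      unfold Mb. pose proof (Rle_0_sqr t). unfold Rsqr in H. nra.
    - destruct (Rle_dec (eta / 4) (Rabs (Im lam))) as [CC|CC].
      + assert (Im lam <> 0) by (intro E; rewrite E, Rabs_R0 in CC; lra).
        destruct (sa_res h lam Hh H) as [c [Hc Hcn]]. exists c. split; auto.
        eapply Rle_trans. apply Hcn. fold t.
        assert ((t * t + 1) / Rabs (Im lam) <= (t * t + 1) * (4 / eta)).
        { unfold Rdiv. apply Rmult_le_compat_l. pose proof (Rle_0_sqr t). unfold Rsqr in H0. lra.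
          apply Rle_trans with (/ (eta / 4)). apply Rinv_le_contravar; lra. right; field; lra. }
        unfold Mb. lra.
      + (* near the real axis *)
        set (a := Re lam). set (b := Im lam).
        assert (HL : Cmod lam * Cmod lam = a * a + b * b) by apply Cmod_sq.
        assert (HLa : Rabs a <= Cmod lam) by apply Cmod_Re.
        assert (HLb : Cmod lam <= Rabs a + Rabs b).
        { apply Cmod_le_of_sq. pose proof (Rabs_pos a); pose proof (Rabs_pos b); lra.
          fold a b. pose proof (Rabs_pos a); pose proof (Rabs_pos b).
          assert (a * a = Rabs a * Rabs a) by (rewrite <- Rabs_mult; rewrite Rabs_right; nra).
          assert (b * b = Rabs b * Rabs b) by (rewrite <- Rabs_mult; rewrite Rabs_right; nra). nra. }
        assert (Hab : Rabs (Rabs a - t) <= 3 * eta / 4).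
        { unfold rho in Hlam. apply Rabs_le. fold b in CC. lra. }
        assert (Hbb : Rabs b <= eta / 4) by (fold b in CC; lra).
        assert (Hsq : (Rabs a - t) * (Rabs a - t) + b * b <= eta * eta).
        { assert (b * b = Rabs b * Rabs b) by (rewrite <- Rabs_mult; rewrite Rabs_right; nra).
          assert ((Rabs a - t) * (Rabs a - t) = Rabs (Rabs a - t) * Rabs (Rabs a - t))
            by (pose proof (Rsqr_abs (Rabs a - t)); unfold Rsqr in *; lra).
          pose proof (Rabs_pos b). pose proof (Rabs_pos (Rabs a - t)). nra. }
        destruct (Rle_dec 0 a) as [Ha|Ha].
        * destruct (perturb (csub (sc (RC t)) h) (copp b1) (sc (Csub lam (RC t))) m0) as [c [Hc Hcn]];
            try apply I1; auto.
          rewrite sc_norm. eapply Rle_trans; [|apply Heta1]. apply Cmod_le_of_sq. lra.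
          simpl. rewrite Rabs_right in Hsq by lra. fold a b. lra.
          exists c. split. replace (csub (sc lam) h) with (cadd (csub (sc (RC t)) h) (sc (Csub lam (RC t)))). auto.
          rewrite sc_sub. apply sub_add_sub.
          eapply Rle_trans. apply Hcn. unfold Mb. pose proof (Rle_0_sqr t). unfold Rsqr in *. nra.
        * destruct (perturb (csub (sc (RC (- t))) h) (copp b2) (sc (Csub lam (RC (- t)))) m0) as [c [Hc Hcn]];
            try apply I2; auto.
          rewrite sc_norm. eapply Rle_trans; [|apply Heta1]. apply Cmod_le_of_sq. lra.
          simpl. rewrite Rabs_left in Hsq by lra. fold a b. lra.
          exists c. split. replace (csub (sc lam) h) with (cadd (csub (sc (RC (- t))) h) (sc (Csub lam (RC (- t))))). auto.
          rewrite sc_sub. apply sub_add_sub.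
          eapply Rle_trans. apply Hcn. unfold Mb. pose proof (Rle_0_sqr t). unfold Rsqr in *. nra. }
  set (fr := fun lam => inv (csub (sc lam) h)).
  assert (Hf : forall lam, rho <= Cmod lam -> isinv (csub (sc lam) h) (fr lam) /\ cnorm (fr lam) <= Mb).
  { intros lam Hl. destruct (Hex lam Hl) as [c [[Hc1 Hc2] Hcn]].
    unfold fr. rewrite (inv_eq _ c) by auto. split; auto. split; auto. }
  pose proof (core h rho Mb fr Hrho HMb Hf) as Hcore.
  set (q := t / rho).
  assert (Hq : 1 < q).
  { assert (rho < t) by (unfold rho; lra). unfold q. apply (Rmult_lt_reg_r rho); auto. unfold Rdiv.
    rewrite Rmult_assoc, Rinv_l, Rmult_1_r, Rmult_1_l by lra. auto. }
  destruct (nat_above (rho * Mb / (q - 1))) as [j Hj].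
  specialize (Hcore (2 ^ j)%nat). rewrite sa_pow2 in Hcore by auto. fold t in Hcore.
  assert (Ht_eq : t = q * rho) by (unfold q; field; lra).
  rewrite Ht_eq, Rpow_mult_distr, pow_add in Hcore. simpl pow in Hcore.
  assert (Hrn : 0 < rho ^ (2 ^ j)) by (apply pow_lt; auto).
  assert (q ^ (2 ^ j) <= rho * Mb).
  { apply (Rmult_le_reg_r (rho ^ (2 ^ j))); auto. nra. }
  pose proof (bern q (2 ^ j) ltac:(lra)).
  assert (INR j <= INR (2 ^ j)) by (apply le_INR, le_pow2).
  assert (rho * Mb < INR j * (q - 1)).
  { apply (Rmult_lt_reg_r (/ (q - 1))). apply Rinv_0_lt_compat; lra.
    replace (INR j * (q - 1) * / (q - 1)) with (INR j) by (field; lra). auto. }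
  nra.
Qed.
End Pos.


Lemma Rabs_le_between x a : Rabs x <= a -> - a <= x <= a.
Proof. intros H. unfold Rabs in H. destruct (Rcase_abs x); lra. Qed.

Section Mono.
Context {A : CstarAlgebra}.
Implicit Types a b c g : A.

Lemma invertible_opp_iff a : invertible A (copp a) <-> invertible A a.
Proof. split; intros H. rewrite <- (oppK a). apply invertible_opp; auto. apply invertible_opp; auto. Qed.

Lemma spec_shift a (s w : Cx) : spectrum A (csub (sc s) a) w <-> spectrum A a (Csub s w).
Proof.
  unfold spectrum. change (cscal w cone) with (@sc A w). change (cscal (Csub s w) cone) with (@sc A (Csub s w)).
  replace (csub (csub (sc s) a) (sc w)) with (copp (csub a (sc (Csub s w)))).
  rewrite invertible_opp_iff. tauto.
  rewrite sc_sub. unfold csub. rewrite !opp_add, !oppK.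
  rewrite (cadd_comm (copp a)), <- !cadd_assoc. f_equal. apply cadd_comm.
Qed.

Lemma Csub_RC_Re r z : Re (Csub (RC r) z) = r - Re z.
Proof. simpl. ring. Qed.
Lemma Csub_RC_Im r z : Im (Csub (RC r) z) = - Im z.
Proof. simpl. ring. Qed.

Lemma sc_sa_sub a (s : R) : cstar a = a -> cstar (csub (sc (RC s)) a) = csub (sc (RC s)) a.
Proof. intros H. rewrite star_sub, sc_RC_star, H. auto. Qed.

Lemma U1 a s : Defs.positive a -> cnorm a <= s -> cnorm (csub (sc (RC s)) a) <= s.
Proof.
  intros [Ha Hp] Hs. set (g := csub (sc (RC s)) a).
  assert (Hg : cstar g = g) by (apply sc_sa_sub; auto).
  pose proof (norm_ge0 a). pose proof (norm_ge0 g).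
  destruct (sa_norm_spec g Hg) as [H1|H1]; apply spec_shift in H1.
  - destruct (Hp _ H1) as [_ H2]. simpl in H2. lra.
  - pose proof (spec_bound _ _ H1). destruct (Hp _ H1) as [_ H3]. simpl in H3.
    pose proof (Cmod_Re (Csub (RC s) (RC (- cnorm g)))). simpl in H4.
    rewrite Rabs_right in H4 by lra. lra.
Qed.

Lemma U2 a c : Defs.positive a -> Defs.positive c -> Defs.positive (cadd a c).
Proof.
  intros Pa Pc. pose proof Pa as [Ha _]. pose proof Pc as [Hc _].
  assert (Hs : cstar (cadd a c) = cadd a c) by (rewrite cstar_add, Ha, Hc; auto).
  split; auto. intros z Hz. split. apply (sa_spec_real _ _ Hs Hz).
  set (s := cnorm a + cnorm c). pose proof (norm_ge0 a). pose proof (norm_ge0 c).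
  set (g := csub (sc (RC (2 * s))) (cadd a c)).
  assert (Eg : g = cadd (csub (sc (RC s)) a) (csub (sc (RC s)) c)).
  { unfold g. replace (RC (2 * s)) with (Cadd (RC s) (RC s)) by (unfold RC; cx).
    rewrite sc_add. unfold csub. rewrite opp_add, <- !cadd_assoc. f_equal.
    rewrite cadd_comm, <- !cadd_assoc. f_equal. apply cadd_comm. }
  assert (Hgn : cnorm g <= 2 * s).
  { rewrite Eg. eapply Rle_trans. apply cnorm_triangle.
    pose proof (U1 a s Pa ltac:(unfold s; lra)). pose proof (U1 c s Pc ltac:(unfold s; lra)). lra. }
  assert (Hsp : spectrum A g (Csub (RC (2 * s)) z)).
  { unfold g. apply spec_shift. replace (Csub (RC (2 * s)) (Csub (RC (2 * s)) z)) with z by (unfold RC; cx). auto. }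
  pose proof (spec_bound _ _ Hsp). pose proof (Cmod_Re (Csub (RC (2 * s)) z)).
  rewrite Csub_RC_Re in H2. apply Rabs_le_between in H2 as [_ H2]. lra.
Qed.

Lemma U3 a c : Defs.positive a -> Defs.positive c -> cnorm a <= cnorm (cadd a c).
Proof.
  intros Pa Pc. set (b := cadd a c). set (beta := cnorm b).
  assert (Pb : Defs.positive b) by (apply U2; auto). pose proof Pb as [Hb _].
  pose proof (norm_ge0 b). pose proof (norm_ge0 a).
  assert (P1 : Defs.positive (csub (sc (RC beta)) b)).
  { split. apply sc_sa_sub; auto. intros z Hz. apply spec_shift in Hz.
    pose proof (sa_spec_real _ _ Hb Hz). pose proof (spec_bound _ _ Hz).
    pose proof (Cmod_Re (Csub (RC beta) z)). rewrite Csub_RC_Re in H3. rewrite Csub_RC_Im in H1.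
    apply Rabs_le_between in H3. fold beta in H2. split; lra. }
  assert (P2 : Defs.positive (csub (sc (RC beta)) a)).
  { replace (csub (sc (RC beta)) a) with (cadd (csub (sc (RC beta)) b) c). apply U2; auto.
    unfold b, csub. rewrite opp_add, <- !cadd_assoc. f_equal. f_equal. rewrite cadd_opp. apply add0r. }
  destruct (sa_norm_spec a (proj1 Pa)) as [H1|H1].
  - assert (spectrum A (csub (sc (RC beta)) a) (Csub (RC beta) (RC (cnorm a)))).
    { apply spec_shift. replace (Csub (RC beta) (Csub (RC beta) (RC (cnorm a)))) with (RC (cnorm a)) by (unfold RC; cx). auto. }
    destruct (proj2 P2 _ H2) as [_ H3]. simpl in H3. fold beta. lra.
  - destruct (proj2 Pa _ H1) as [_ H3]. simpl in H3. unfold beta. lra.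
Qed.

Lemma cle_norm (d e : A) : Defs.positive d -> cle d e -> cnorm d <= cnorm e.
Proof.
  intros Pd He. unfold cle in He. pose proof (U3 d (csub e d) Pd He).
  unfold csub in H. rewrite cadd_comm, <- cadd_assoc, cadd_opp, add0r in H. auto.
Qed.
End Mono.


Lemma iter_S {X : Type} (T : X -> X) n x : iter (S n) T x = iter n T (T x).
Proof. induction n; simpl; auto. simpl in IHn. rewrite IHn. auto. Qed.
Lemma iter_fix {X : Type} (T : X -> X) n u : T u = u -> iter n T u = u.
Proof. intros H. induction n; simpl; auto. rewrite IHn; auto. Qed.

Lemma pow_le_one k m : 0 <= k <= 1 -> k ^ m <= 1.
Proof. intros H. induction m; simpl. lra. assert (0 <= k ^ m) by (apply pow_le; lra). nra. Qed.
Lemma pow_decr k n m : 0 <= k <= 1 -> (n <= m)%nat -> k ^ m <= k ^ n.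
Proof.
  intros H Hnm. replace m with (n + (m - n))%nat by lia. rewrite pow_add.
  pose proof (pow_le_one k (m - n) H). assert (0 <= k ^ n) by (apply pow_le; lra). nra.
Qed.

Lemma Un_cv_bound (a : nat -> R) (K k : R) (g : nat -> nat) :
  0 <= K -> 0 <= k < 1 -> (forall n, (n <= g n)%nat) -> (forall n, 0 <= a n <= K * k ^ (g n)) -> Un_cv a 0.
Proof.
  intros HK Hk Hg Ha eps He.
  destruct (pow_small k (eps / (K + 1))) as [N HN]; auto.
  apply Rdiv_lt_0_compat; lra.
  exists N. intros n Hn. unfold R_dist. rewrite Rminus_0_r. destruct (Ha n) as [H1 H2].
  rewrite Rabs_right by lra.
  assert (k ^ g n <= k ^ n). { apply pow_decr. lra. apply Hg. }
  assert (k ^ n < eps / (K + 1)) by (apply HN; auto).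
  assert (K * k ^ g n <= K * (eps / (K + 1))).
  { apply Rmult_le_compat_l; auto. lra. }
  assert (K * (eps / (K + 1)) < eps).
  { apply (Rmult_lt_reg_r (K + 1)). lra. unfold Rdiv. field_simplify; lra. }
  lra.
Qed.

Theorem theorem3p6 (A : CstarAlgebra) (X : Type) (d : X -> X -> A) (T : X -> X) :
  cstar_metric A X d ->
  ccomplete_metric d ->
  ciric_type1 d T ->
  (orbitally_continuous d T <-> exists! u : X, T u = u).
Proof.
  intros [Hinh [Hpos [Hzero [Hsym Htri]]]] Hcomp [q [del [Hq [Hdel Hc]]]].
  set (D := fun x y => cnorm (d x y)).
  assert (D0 : forall x y, 0 <= D x y) by (intros; apply norm_ge0).
  assert (Dsym : forall x y, D x y = D y x) by (intros; unfold D; rewrite Hsym; auto).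
  assert (Dtri : forall x y z, D x y <= D x z + D z y).
  { intros. unfold D. eapply Rle_trans. apply cle_norm. apply Hpos. apply Htri. apply cnorm_triangle. }
  assert (Deq : forall x y, D x y = 0 -> x = y).
  { intros x y H. apply Hzero. apply cnorm_eq0. auto. }
  set (kk := fun x y => cnorm (q x y)).
  set (KK := fun x y => cnorm (del x y) + D x y).
  assert (Hkk : forall x y, 0 <= kk x y < 1) by (intros; unfold kk; apply Hq).
  assert (HKK : forall x y, 0 <= KK x y) by (intros; unfold KK; pose proof (norm_ge0 (del x y)); pose proof (D0 x y); lra).
  assert (Dc : forall x y n, D (iter n T x) (iter n T y) <= KK x y * kk x y ^ n).
  { intros x y n. destruct n.
    - simpl. unfold KK. pose proof (norm_ge0 (del x y)). lra.
    - unfold D. eapply Rle_trans. apply cle_norm. apply Hpos. apply Hc. lia.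
      eapply Rle_trans. apply norm_mul3.
      pose proof (cpow_norm (cstar (q x y)) (S n)) as H1. rewrite norm_star in H1.
      pose proof (cpow_norm (q x y) (S n)) as H2. fold (kk x y) in H1, H2.
      pose proof (norm_ge0 (del x y)). pose proof (norm_ge0 (cpow (cstar (q x y)) (S n))).
      pose proof (norm_ge0 (cpow (q x y) (S n))).
      destruct (Hkk x y). assert (0 <= kk x y ^ S n) by (apply pow_le; lra).
      assert (kk x y ^ S n <= 1) by (apply pow_le_one; lra).
      unfold KK. pose proof (D0 x y).
      apply Rle_trans with (kk x y ^ S n * cnorm (del x y) * kk x y ^ S n).
      apply Rmult_le_compat. apply Rmult_le_pos; lra. lra. apply Rmult_le_compat_r; lra. lra.
      assert (kk x y ^ S n * cnorm (del x y) <= cnorm (del x y)) by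
        (assert (0 <= (1 - kk x y ^ S n) * cnorm (del x y)) by (apply Rmult_le_pos; lra); lra).
      assert (kk x y ^ S n * cnorm (del x y) * kk x y ^ S n <= cnorm (del x y) * kk x y ^ S n) by
        (apply Rmult_le_compat_r; lra).
      assert (0 <= D x y * kk x y ^ S n) by (apply Rmult_le_pos; lra).
      unfold KK. lra. }
  assert (Hfixconv : forall u x (g : nat -> nat), T u = u -> (forall n, (n <= g n)%nat) ->
            cconverges d (fun n => iter (g n) T x) u).
  { intros u x g Hu Hg. unfold cconverges.
    apply (Un_cv_bound _ (KK x u) (kk x u) g); auto.
    intros n. split. apply norm_ge0. fold (D (iter (g n) T x) u).
    pose proof (Dc x u (g n)) as Hd. rewrite (iter_fix T (g n) u Hu) in Hd. exact Hd. }
  assert (Huniq : forall (u : nat -> X) z w, cconverges d u z -> cconverges d u w -> z = w).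
  { intros u z w H1 H2. apply Deq. apply Rle_eps0. apply D0. intros eps He.
    destruct (H1 (eps / 2)) as [N1 HN1]. lra. destruct (H2 (eps / 2)) as [N2 HN2]. lra.
    specialize (HN1 (N1 + N2)%nat ltac:(lia)). specialize (HN2 (N1 + N2)%nat ltac:(lia)).
    unfold R_dist in *. rewrite Rminus_0_r, Rabs_right in HN1, HN2 by apply Rle_ge, norm_ge0.
    pose proof (Dtri z w (u (N1 + N2)%nat)). rewrite (Dsym z (u (N1 + N2)%nat)) in H. unfold D in *. lra. }
  split.
  - intros Hoc. destruct Hinh as [x0].
    set (k0 := kk x0 (T x0)). set (K0 := KK x0 (T x0)).
    destruct (Hkk x0 (T x0)) as [Hk0 Hk1]. fold k0 in Hk0, Hk1.
    assert (Hstep : forall n, D (iter n T x0) (iter (S n) T x0) <= K0 * k0 ^ n).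
    { intros n. rewrite iter_S. apply Dc. }
    assert (Hfar : forall m j, D (iter m T x0) (iter (j + m) T x0) <= K0 * k0 ^ m * (1 - k0 ^ j) / (1 - k0)).
    { intros m j. induction j.
      - simpl. replace (K0 * k0 ^ m * (1 - 1) / (1 - k0)) with 0 by (field; lra).
        unfold D. rewrite (proj2 (Hzero _ _) eq_refl), norm0. lra.
      - eapply Rle_trans. apply (Dtri _ _ (iter (j + m) T x0)).
        eapply Rle_trans. apply Rplus_le_compat. apply IHj. apply Hstep.
        right. simpl pow. rewrite pow_add. field. lra. }
    assert (Hcauchy : ccauchy d (fun n => iter n T x0)).
    { intros eps He. assert (HK0 : 0 <= K0) by apply HKK.
      destruct (pow_small k0 (eps * (1 - k0) / (K0 + 1))) as [N HN]. lra.
      apply Rdiv_lt_0_compat; [apply Rmult_lt_0_compat|]; lra.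
      assert (Hgen : forall i j, (i >= N)%nat -> (j >= i)%nat -> D (iter i T x0) (iter j T x0) < eps).
      { intros i j Hi Hj. replace j with ((j - i) + i)%nat by lia.
        eapply Rle_lt_trans. apply Hfar.
        assert (H1 : k0 ^ i < eps * (1 - k0) / (K0 + 1)) by (apply HN; lia).
        assert (H2 : 0 <= k0 ^ (j - i)) by (apply pow_le; lra).
        assert (H3 : 0 <= k0 ^ i) by (apply pow_le; lra).
        apply Rle_lt_trans with (K0 * k0 ^ i / (1 - k0)).
        { unfold Rdiv. apply Rmult_le_compat_r. left; apply Rinv_0_lt_compat; lra.
          assert (0 <= K0 * k0 ^ i) by (apply Rmult_le_pos; lra). nra. }
        apply (Rmult_lt_reg_r (1 - k0)). lra. unfold Rdiv. rewrite Rmult_assoc, Rinv_l, Rmult_1_r by lra.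
        apply (Rmult_lt_compat_r (K0 + 1)) in H1; [|lra].
        unfold Rdiv in H1. rewrite Rmult_assoc, Rinv_l, Rmult_1_r in H1 by lra. nra. }
      exists N. intros n m Hn Hm. fold (D (iter n T x0) (iter m T x0)).
      destruct (Nat.le_ge_cases n m). apply Hgen; lia. rewrite Dsym. apply Hgen; lia. }
    destruct (Hcomp _ Hcauchy) as [z Hz].
    pose proof (Hoc z x0 (fun i => i) (fun i => Nat.lt_succ_diag_r i) Hz) as H1. simpl in H1.
    assert (H2 : cconverges d (fun i => iter (S i) T x0) z).
    { intros eps He. destruct (Hz eps He) as [N HN]. exists N. intros n Hn. apply HN. lia. }
    assert (Hfz : T z = z) by (apply (Huniq _ _ _ H1 H2)).
    exists z. split; auto. intros v Hv.
    apply (Huniq (fun n => iter n T z)). apply (Hfixconv z z (fun n => n)); auto.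
    apply (Hfixconv v z (fun n => n)); auto.
  - intros [u [Hu Huq]]. intros w x ni Hni Hconv.
    assert (Hge : forall i, (i <= ni i)%nat).
    { induction i. lia. specialize (Hni i). lia. }
    pose proof (Hfixconv u x ni Hu Hge) as H1.
    assert (w = u) by (apply (Huniq _ _ _ Hconv H1)). subst w.
    rewrite Hu. apply (Hfixconv u x (fun i => S (ni i))). auto.
    intros i. specialize (Hge i). lia.
Qed.
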